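(* Let $\lambda(\varepsilon)$ be the real root of $\det\Delta_\varepsilon(z)=0$ defined for small $\varepsilon>0$ with $\lambda(\varepsilon)\to\lambda_0$ as $\varepsilon\to0^+$. For $\delta>0$ sufficiently small and any $\delta_1>0$, there exists $\varepsilon_0>0$ such that for $0<\varepsilon<\varepsilon_0$, $\lambda(\varepsilon)$ is the only root of $\det\Delta_\varepsilon(z)=0$ in the strip $\lambda_0-\delta\le\Re z\le\lambda_0+\delta_1$.
   Context: $L:C([-\tau,0];\mathbb{R}^N)\to\mathbb{R}^N$ is a bounded linear operator; $L(e^{z\cdot}I)$ denotes the complex $N\times N$ matrix whose $j$-th column is $L$ (extended complex-linearly) applied to $\theta\mapsto e^{z\theta}e_j$. Let $\Delta_\varepsilon(z)=\varepsilon^2z^2I-zI+L(e^{z\cdot}I)$ (so $\Delta_0(z)=L(e^{z\cdot}I)-zI$). Assume $\lambda_0>0$ is a real simple zero of $\det\Delta_0$ that is dominant ($\Re z<\lambda_0$ for all other zeros $z$ of $\det\Delta_0$). By the implicit function theorem, for small $\varepsilon>0$ there is a simple real zero $\lambda(\varepsilon)$ of $\det\Delta_\varepsilon$ with $\lambda(\varepsilon)\to\lambda_0$. *)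

(* Defs.v *)
From Stdlib Require Import Reals.
Open Scope R_scope.

(** Complex numbers as pairs (real part, imaginary part). *)
Definition C := (R * R)%type.
Definition C0 : C := (0, 0).
Definition C1 : C := (1, 0).
Definition RtoC (x : R) : C := (x, 0).
Definition Cadd (a b : C) : C := (fst a + fst b, snd a + snd b).
Definition Copp (a : C) : C := (- fst a, - snd a).
Definition Csub (a b : C) : C := Cadd a (Copp b).
Definition Cmul (a b : C) : C :=
  (fst a * fst b - snd a * snd b, fst a * snd b + snd a * fst b).
Definition Cnorm (a : C) : R := sqrt (fst a * fst a + snd a * snd a).

Definition skip (i k : nat) : nat := if Nat.ltb k i then k else S k.
Definition minor (A : nat -> nat -> C) (i j : nat) : nat -> nat -> C :=
  fun k l => A (skip i k) (skip j l).
Definition Csum (f : nat -> C) (n : nat) : C :=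
  List.fold_right (fun j acc => Cadd (f j) acc) C0 (List.seq 0 n).
Definition sgn (j : nat) : C := if Nat.even j then C1 else Copp C1.
Fixpoint det (n : nat) (A : nat -> nat -> C) : C :=
  match n with
  | O => C1
  | S m => Csum (fun j => Cmul (sgn j) (Cmul (A 0%nat j) (det m (minor A 0 j)))) (S m)
  end.

(** Functions phi : [-tau,0] -> R^N are represented as R -> nat -> R
    (phi theta k = k-th component at theta); only theta in [-tau,0] and k < N matter. *)
Definition cont_on (tau : R) (N : nat) (phi : R -> nat -> R) : Prop :=
  forall k, (k < N)%nat -> forall t, -tau <= t <= 0 ->
  forall e, 0 < e -> exists d, 0 < d /\
    forall s, -tau <= s <= 0 -> Rabs (s - t) < d -> Rabs (phi s k - phi t k) < e.

Definition bounded_linear_op (tau : R) (N : nat)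
    (L : (R -> nat -> R) -> nat -> R) : Prop :=
  (forall phi psi, cont_on tau N phi -> cont_on tau N psi ->
     forall i, (i < N)%nat -> L (fun t k => phi t k + psi t k) i = L phi i + L psi i) /\
  (forall c phi, cont_on tau N phi ->
     forall i, (i < N)%nat -> L (fun t k => c * phi t k) i = c * L phi i) /\
  (exists M, forall phi B, cont_on tau N phi ->
     (forall t k, -tau <= t <= 0 -> (k < N)%nat -> Rabs (phi t k) <= B) ->
     forall i, (i < N)%nat -> Rabs (L phi i) <= M * B).

(** Entry (i,j) of L(e^{z.} I), L extended complex-linearly:
    L(e^{z.} e_j) = L(Re(e^{z.}) e_j) + i L(Im(e^{z.}) e_j). *)
Definition Lexp (L : (R -> nat -> R) -> nat -> R) (z : C) (i j : nat) : C :=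
  (L (fun t k => if Nat.eqb k j then exp (fst z * t) * cos (snd z * t) else 0) i,
   L (fun t k => if Nat.eqb k j then exp (fst z * t) * sin (snd z * t) else 0) i).

Definition Delta (L : (R -> nat -> R) -> nat -> R) (eps : R) (z : C) (i j : nat) : C :=
  Cadd (if Nat.eqb i j then Csub (Cmul (RtoC (eps * eps)) (Cmul z z)) z else C0)
       (Lexp L z i j).

Definition charfun (L : (R -> nat -> R) -> nat -> R) (N : nat) (eps : R) (z : C) : C :=
  det N (Delta L eps z).

Definition Cderiv (f : C -> C) (z d : C) : Prop :=
  forall e, 0 < e -> exists r, 0 < r /\
    forall h, Cnorm h < r ->
      Cnorm (Csub (Csub (f (Cadd z h)) (f z)) (Cmul d h)) <= e * Cnorm h.

(* Main.v *)
Require Import Defs.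
From Stdlib Require Import Reals Lra Lia Psatz List Classical ClassicalEpsilon FunctionalExtensionality.
From Stdlib Require Import Factorial.
Import Defs.
Open Scope R_scope.


Notation Cn := Cnorm.

Lemma Cext (a b : C) : fst a = fst b -> snd a = snd b -> a = b.
Proof. destruct a, b; simpl; intros; subst; reflexivity. Qed.

Ltac Cring := apply Cext; unfold Csub, Cadd, Copp, Cmul, RtoC, C0, C1; simpl; ring.

Lemma Cn_nonneg a : 0 <= Cn a.
Proof. unfold Cnorm; apply sqrt_pos. Qed.

Lemma Cn_sq a : Cn a * Cn a = fst a * fst a + snd a * snd a.
Proof. unfold Cnorm; apply sqrt_sqrt; nra. Qed.

Lemma Cn_fst a : Rabs (fst a) <= Cn a.
Proof.
  pose proof (Cn_sq a); pose proof (Cn_nonneg a).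
  apply Rsqr_incr_0_var; [|auto]. rewrite <- Rsqr_abs.
  unfold Rsqr; nra.
Qed.

Lemma Cn_snd a : Rabs (snd a) <= Cn a.
Proof.
  pose proof (Cn_sq a); pose proof (Cn_nonneg a).
  apply Rsqr_incr_0_var; [|auto]. rewrite <- Rsqr_abs.
  unfold Rsqr; nra.
Qed.

Lemma Cn_le_l1 a : Cn a <= Rabs (fst a) + Rabs (snd a).
Proof.
  pose proof (Cn_sq a); pose proof (Cn_nonneg a).
  pose proof (Rabs_pos (fst a)); pose proof (Rabs_pos (snd a)).
  apply Rsqr_incr_0_var; [|lra]. unfold Rsqr.
  pose proof (Rsqr_abs (fst a)); pose proof (Rsqr_abs (snd a)); unfold Rsqr in *. nra.
Qed.

Lemma Cn_mul a b : Cn (Cmul a b) = Cn a * Cn b.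
Proof.
  pose proof (Cn_sq a); pose proof (Cn_nonneg a).
  pose proof (Cn_sq b); pose proof (Cn_nonneg b).
  pose proof (Cn_sq (Cmul a b)); pose proof (Cn_nonneg (Cmul a b)).
  assert (E : Cn (Cmul a b) * Cn (Cmul a b) = (Cn a * Cn b) * (Cn a * Cn b)).
  { rewrite H3. transitivity ((Cn a * Cn a) * (Cn b * Cn b)); [|ring].
    rewrite H, H1; unfold Cmul; simpl; ring. }
  apply Rsqr_inj; unfold Rsqr; [auto|nra|exact E].
Qed.

Lemma Cn_add a b : Cn (Cadd a b) <= Cn a + Cn b.
Proof.
  pose proof (Cn_sq a); pose proof (Cn_nonneg a).
  pose proof (Cn_sq b); pose proof (Cn_nonneg b).
  pose proof (Cn_sq (Cadd a b)); pose proof (Cn_nonneg (Cadd a b)).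
  unfold Cadd in *; simpl in *.
  assert (HCS : fst a * fst b + snd a * snd b <= Cn a * Cn b).
  { assert ((Cn a * Cn b) * (Cn a * Cn b) = (fst a * fst a + snd a * snd a) * (fst b * fst b + snd b * snd b)) by (rewrite <- H, <- H1; ring).
    assert (0 <= Cn a * Cn b) by nra.
    assert (HC: (fst a * fst b + snd a * snd b) * (fst a * fst b + snd a * snd b) <= (Cn a * Cn b) * (Cn a * Cn b)).
    { rewrite H5. pose proof (Rle_0_sqr (fst a * snd b - snd a * fst b)); unfold Rsqr in *; nra. }
    destruct (Rle_or_lt (fst a * fst b + snd a * snd b) (Cn a * Cn b)); auto. nra. }
  apply Rsqr_incr_0_var; unfold Rsqr; nra.
Qed.

Lemma Cn_opp a : Cn (Copp a) = Cn a.
Proof. unfold Cnorm, Copp; simpl; f_equal; ring. Qed.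

Lemma Cn_sub a b : Cn (Csub a b) <= Cn a + Cn b.
Proof. unfold Csub; rewrite <- (Cn_opp b); apply Cn_add. Qed.

Lemma Cn_sub_sym a b : Cn (Csub a b) = Cn (Csub b a).
Proof. replace (Csub a b) with (Copp (Csub b a)) by Cring. apply Cn_opp. Qed.

Lemma Cn_tri a b c : Cn (Csub a c) <= Cn (Csub a b) + Cn (Csub b c).
Proof. replace (Csub a c) with (Cadd (Csub a b) (Csub b c)) by Cring. apply Cn_add. Qed.

Lemma Cn_rev a b : Cn a - Cn b <= Cn (Cadd a b).
Proof.
  pose proof (Cn_add (Cadd a b) (Copp b)). rewrite Cn_opp in H.
  replace (Cadd (Cadd a b) (Copp b)) with a in H by Cring. lra.
Qed.

Lemma Cn_RtoC x : Cn (RtoC x) = Rabs x.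
Proof. unfold Cnorm, RtoC; simpl. rewrite Rmult_0_l, Rplus_0_r. apply sqrt_Rsqr_abs. Qed.

Lemma Cn_C0 : Cn C0 = 0.
Proof. unfold Cnorm, C0; simpl. rewrite Rmult_0_l, Rplus_0_r. apply sqrt_0. Qed.

Lemma Cn_C1 : Cn C1 = 1.
Proof. unfold Cnorm, C1; simpl. rewrite Rmult_0_l, Rplus_0_r, Rmult_1_l. apply sqrt_1. Qed.

Lemma Cn_zero a : Cn a = 0 -> a = C0.
Proof.
  intro H. pose proof (Cn_fst a); pose proof (Cn_snd a). rewrite H in *.
  pose proof (Rabs_pos (fst a)); pose proof (Rabs_pos (snd a)).
  apply Cext; simpl; [destruct (Req_dec (fst a) 0) as [E|E]|destruct (Req_dec (snd a) 0) as [E|E]];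
  auto; apply Rabs_pos_lt in E; lra.
Qed.

Lemma Csub_eq0 a b : Cn (Csub a b) = 0 -> a = b.
Proof.
  intro H; apply Cn_zero in H. unfold Csub, Cadd, Copp, C0 in H.
  injection H; intros. apply Cext; lra.
Qed.


Lemma fold_bound (f : nat -> C) c l :
  (forall j, In j l -> Cn (f j) <= c) ->
  Cn (fold_right (fun j acc => Cadd (f j) acc) C0 l) <= INR (length l) * c.
Proof.
  induction l as [|a l IH]; intros H; cbn [fold_right length].
  - rewrite Cn_C0; simpl; lra.
  - eapply Rle_trans; [apply Cn_add|].
    rewrite S_INR. assert (Cn (f a) <= c) by (apply H; left; auto).
    assert (Cn (fold_right (fun j acc => Cadd (f j) acc) C0 l) <= INR (length l) * c)
      by (apply IH; intros; apply H; right; auto). lra.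
Qed.

Lemma Csum_bound f n c : (forall j, (j < n)%nat -> Cn (f j) <= c) -> Cn (Csum f n) <= INR n * c.
Proof.
  intros H. unfold Csum. rewrite <- (length_seq n 0) at 2. apply fold_bound.
  intros j Hj. apply in_seq in Hj. apply H; lia.
Qed.

Lemma Csum_sub f g n : Csub (Csum f n) (Csum g n) = Csum (fun j => Csub (f j) (g j)) n.
Proof.
  unfold Csum. induction (seq 0 n) as [|a l IH]; simpl.
  - Cring.
  - rewrite <- IH. Cring.
Qed.

Lemma fold_shift (f : nat -> C) k m :
  fold_right (fun j acc => Cadd (f j) acc) C0 (seq (S k) m) =
  fold_right (fun j acc => Cadd (f (S j)) acc) C0 (seq k m).
Proof.
  revert k; induction m; intros k; simpl; auto. rewrite IHm. reflexivity.
Qed.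

Lemma Csum_S f m : Csum f (S m) = Cadd (f 0%nat) (Csum (fun j => f (S j)) m).
Proof. unfold Csum. simpl. rewrite fold_shift. reflexivity. Qed.

Lemma skip_lt i k m : (k < m)%nat -> (skip i k < S m)%nat.
Proof. unfold skip; destruct (Nat.ltb k i); lia. Qed.

Lemma Cn_sgn j : Cn (sgn j) = 1.
Proof. unfold sgn; destruct (Nat.even j); [|rewrite Cn_opp]; apply Cn_C1. Qed.

Lemma detBound n : forall A B, 0 <= B -> (forall i j, (i < n)%nat -> (j < n)%nat -> Cn (A i j) <= B) ->
  Cn (det n A) <= INR (fact n) * B ^ n.
Proof.
  induction n as [|m IH]; intros A B HB H.
  - simpl. rewrite Cn_C1. lra.
  - simpl det. eapply Rle_trans.
    + apply (Csum_bound _ _ (B * (INR (fact m) * B ^ m))).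
      intros j Hj. rewrite !Cn_mul, Cn_sgn, Rmult_1_l.
      apply Rmult_le_compat; try apply Cn_nonneg. apply H; lia.
      apply IH; auto. intros i k Hi Hk. unfold minor. apply H; apply skip_lt; auto.
    + replace (fact (S m)) with (S m * fact m)%nat by reflexivity.
      rewrite mult_INR. simpl pow. lra.
Qed.

Fixpoint DL (n : nat) (B : R) : R :=
  match n with
  | O => 0
  | S m => INR (S m) * (INR (fact m) * B ^ m + B * DL m B)
  end.

Lemma DL_nonneg n B : 0 <= B -> 0 <= DL n B.
Proof.
  intros HB; induction n; cbn [DL]; [lra|].
  apply Rmult_le_pos; [apply pos_INR|].
  pose proof (pos_INR (fact n)); pose proof (pow_le B n HB). nra.
Qed.

Lemma detLip n : forall A A' B d, 0 <= B ->
  (forall i j, (i < n)%nat -> (j < n)%nat ->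
     Cn (A i j) <= B /\ Cn (A' i j) <= B /\ Cn (Csub (A i j) (A' i j)) <= d) ->
  Cn (Csub (det n A) (det n A')) <= DL n B * d.
Proof.
  induction n as [|m IH]; intros A A' B d HB H.
  - simpl. replace (Csub C1 C1) with C0 by Cring. rewrite Cn_C0. lra.
  - assert (Hd : 0 <= d).
    { destruct (H 0%nat 0%nat) as [_ [_ X]]; try lia. pose proof (Cn_nonneg (Csub (A 0%nat 0%nat) (A' 0%nat 0%nat))). lra. }
    simpl det. rewrite Csum_sub. eapply Rle_trans.
    + apply (Csum_bound _ _ (d * (INR (fact m) * B ^ m) + B * (DL m B * d))).
      intros j Hj.
      set (M := minor A 0 j). set (M' := minor A' 0 j).
      replace (Csub (Cmul (sgn j) (Cmul (A 0%nat j) (det m M))) (Cmul (sgn j) (Cmul (A' 0%nat j) (det m M'))))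
        with (Cmul (sgn j) (Cadd (Cmul (Csub (A 0%nat j) (A' 0%nat j)) (det m M)) (Cmul (A' 0%nat j) (Csub (det m M) (det m M'))))) by Cring.
      rewrite Cn_mul, Cn_sgn, Rmult_1_l. eapply Rle_trans; [apply Cn_add|]. rewrite !Cn_mul.
      destruct (H 0%nat j) as [H1 [H2 H3]]; try lia.
      assert (Cn (det m M) <= INR (fact m) * B ^ m).
      { apply detBound; auto. intros i k Hi Hk. unfold M, minor. apply H; apply skip_lt; auto. }
      assert (Cn (Csub (det m M) (det m M')) <= DL m B * d).
      { apply IH; auto. intros i k Hi Hk. unfold M, M', minor. apply H; apply skip_lt; auto. }
      apply Rplus_le_compat; apply Rmult_le_compat; auto using Cn_nonneg.
    + cbn [DL]. lra.
Qed.


Definition shiftD (mu : C) (B : nat -> nat -> C) : nat -> nat -> C :=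
  fun i j => Cadd (if Nat.eqb i j then mu else C0) (B i j).

Lemma Cn_shiftD mu B beta i j : Cn (B i j) <= beta -> Cn (shiftD mu B i j) <= Cn mu + beta.
Proof.
  intros H. unfold shiftD. eapply Rle_trans; [apply Cn_add|].
  destruct (Nat.eqb i j); [lra|]. rewrite Cn_C0. pose proof (Cn_nonneg mu); lra.
Qed.

Lemma detLB n : forall beta, 0 <= beta -> exists c T, 0 < c /\
  forall mu B, T <= Cn mu -> (forall i j, (i < n)%nat -> (j < n)%nat -> Cn (B i j) <= beta) ->
  c * Cn mu ^ n <= Cn (det n (shiftD mu B)).
Proof.
  induction n as [|m IH]; intros beta Hb.
  - exists 1, 0. split; [lra|]. intros. simpl. rewrite Cn_C1. lra.
  - destruct (IH beta Hb) as [c [T [Hc HT]]].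
    set (K := INR m * beta * (INR (fact m) * 2 ^ m)).
    assert (HK : 0 <= K).
    { unfold K. pose proof (pos_INR m); pose proof (pos_INR (fact m)); pose proof (pow_le 2 m ltac:(lra)).
      apply Rmult_le_pos; [apply Rmult_le_pos|apply Rmult_le_pos]; auto. }
    exists (c / 2), (Rmax T (Rmax beta (2 * beta + 2 * K / c + 1))). split; [lra|].
    intros mu B Hmu HB.
    pose proof (Rmax_l T (Rmax beta (2 * beta + 2 * K / c + 1))).
    pose proof (Rmax_r T (Rmax beta (2 * beta + 2 * K / c + 1))).
    pose proof (Rmax_l beta (2 * beta + 2 * K / c + 1)).
    pose proof (Rmax_r beta (2 * beta + 2 * K / c + 1)).
    set (P := Cn mu ^ m).
    assert (HP : 0 <= P) by (apply pow_le, Cn_nonneg).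
    simpl det. rewrite Csum_S.
    assert (HF0 : (Cn mu - beta) * (c * P) <= Cn (Cmul (sgn 0) (Cmul (shiftD mu B 0%nat 0%nat) (det m (minor (shiftD mu B) 0 0))))).
    { rewrite !Cn_mul, Cn_sgn, Rmult_1_l.
      apply Rmult_le_compat; try lra.
      - apply Rmult_le_pos; lra.
      - unfold shiftD. simpl. pose proof (Cn_rev mu (B 0%nat 0%nat)). pose proof (HB 0%nat 0%nat ltac:(lia) ltac:(lia)). lra.
      - change (minor (shiftD mu B) 0 0) with (shiftD mu (fun i j => B (S i) (S j))).
        apply HT; [lra|]. intros i j Hi Hj. apply HB; lia. }
    assert (HF1 : Cn (Csum (fun j => Cmul (sgn (S j)) (Cmul (shiftD mu B 0%nat (S j)) (det m (minor (shiftD mu B) 0 (S j))))) m)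
                 <= K * P).
    { eapply Rle_trans.
      - apply (Csum_bound _ _ (beta * (INR (fact m) * (Cn mu + beta) ^ m))).
        intros j Hj. rewrite !Cn_mul, Cn_sgn, Rmult_1_l.
        apply Rmult_le_compat; try apply Cn_nonneg.
        + unfold shiftD. simpl. replace (Cadd C0 (B 0%nat (S j))) with (B 0%nat (S j)) by Cring.
          apply HB; lia.
        + apply detBound. pose proof (Cn_nonneg mu); lra.
          intros i k Hi Hk. unfold minor. apply Cn_shiftD. apply HB; apply skip_lt; auto.
      - unfold K, P.
        assert ((Cn mu + beta) ^ m <= 2 ^ m * Cn mu ^ m).
        { rewrite <- Rpow_mult_distr. apply pow_incr. pose proof (Cn_nonneg mu). lra. }
        pose proof (pos_INR m); pose proof (pos_INR (fact m)).
        assert (0 <= INR m * beta) by (apply Rmult_le_pos; auto).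
        assert (0 <= INR m * beta * INR (fact m)) by (apply Rmult_le_pos; auto).
        replace (INR m * (beta * (INR (fact m) * (Cn mu + beta) ^ m))) with
          ((INR m * beta * INR (fact m)) * (Cn mu + beta) ^ m) by ring.
        replace (INR m * beta * (INR (fact m) * 2 ^ m) * Cn mu ^ m) with
          ((INR m * beta * INR (fact m)) * (2 ^ m * Cn mu ^ m)) by ring.
        apply Rmult_le_compat_l; auto. }
    pose proof (Cn_rev (Cmul (sgn 0) (Cmul (shiftD mu B 0%nat 0%nat) (det m (minor (shiftD mu B) 0 0))))
      (Csum (fun j => Cmul (sgn (S j)) (Cmul (shiftD mu B 0%nat (S j)) (det m (minor (shiftD mu B) 0 (S j))))) m)).
    assert (Hkey : c / 2 * Cn mu ^ S m <= (Cn mu - beta) * (c * P) - K * P).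
    { simpl pow. fold P.
      assert (Hm2 : 2 * beta + 2 * K / c + 1 <= Cn mu) by lra.
      assert (c / 2 * Cn mu <= (Cn mu - beta) * c - K).
      { assert (2 * K / c * c = 2 * K) by (field; lra). nra. }
      nra. }
    lra.
Qed.


Definition Reg (R0 : R) (g g' : C -> C) (K : R) : Prop :=
  0 <= K /\
  (forall z, Cn z <= R0 -> Cn (g z) <= K) /\
  (forall z, Cn z <= R0 -> Cn (g' z) <= K) /\
  (forall z w, Cn z <= R0 -> Cn w <= R0 -> Cn (Csub (g z) (g w)) <= K * Cn (Csub z w)) /\
  (forall z w u, Cn z <= R0 -> Cn w <= R0 -> Cn u <= R0 ->
     Cn (Csub (Csub (g z) (g w)) (Cmul (g' u) (Csub z w)))
       <= K * (Cn (Csub z w) * (Cn (Csub z u) + Cn (Csub w u)))).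

Lemma Reg_mono R0 g g' K K' : K <= K' -> Reg R0 g g' K -> Reg R0 g g' K'.
Proof.
  intros HK [H0 [H1 [H2 [H3 H4]]]]. repeat split.
  - lra.
  - intros z Hz; specialize (H1 z Hz); lra.
  - intros z Hz; specialize (H2 z Hz); lra.
  - intros z w Hz Hw; specialize (H3 z w Hz Hw). pose proof (Cn_nonneg (Csub z w)). nra.
  - intros z w u Hz Hw Hu; specialize (H4 z w u Hz Hw Hu).
    pose proof (Cn_nonneg (Csub z w)); pose proof (Cn_nonneg (Csub z u)); pose proof (Cn_nonneg (Csub w u)).
    assert (0 <= Cn (Csub z w) * (Cn (Csub z u) + Cn (Csub w u))) by nra. nra.
Qed.

Lemma Reg_const R0 c : Reg R0 (fun _ => c) (fun _ => C0) (Cn c).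
Proof.
  repeat split; intros.
  - apply Cn_nonneg.
  - lra.
  - rewrite Cn_C0; apply Cn_nonneg.
  - replace (Csub c c) with C0 by Cring. rewrite Cn_C0.
    apply Rmult_le_pos; apply Cn_nonneg.
  - replace (Csub (Csub c c) (Cmul C0 (Csub z w))) with C0 by Cring. rewrite Cn_C0.
    apply Rmult_le_pos; [apply Cn_nonneg|]. apply Rmult_le_pos; [apply Cn_nonneg|].
    pose proof (Cn_nonneg (Csub z u)); pose proof (Cn_nonneg (Csub w u)); lra.
Qed.

Lemma Reg_id R0 : 0 <= R0 -> Reg R0 (fun z => z) (fun _ => C1) (R0 + 1).
Proof.
  intros HR. repeat split; intros.
  - lra.
  - lra.
  - rewrite Cn_C1; lra.
  - pose proof (Cn_nonneg (Csub z w)); nra.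
  - replace (Csub (Csub z w) (Cmul C1 (Csub z w))) with C0 by Cring. rewrite Cn_C0.
    pose proof (Cn_nonneg (Csub z w)); pose proof (Cn_nonneg (Csub z u)); pose proof (Cn_nonneg (Csub w u)).
    apply Rmult_le_pos; [lra|]. apply Rmult_le_pos; lra.
Qed.

Lemma Reg_add R0 g g' h h' K1 K2 : Reg R0 g g' K1 -> Reg R0 h h' K2 ->
  Reg R0 (fun z => Cadd (g z) (h z)) (fun z => Cadd (g' z) (h' z)) (K1 + K2).
Proof.
  intros [G0 [G1 [G2 [G3 G4]]]] [H0 [H1 [H2 [H3 H4]]]]. repeat split.
  - lra.
  - intros z H. eapply Rle_trans; [apply Cn_add|]. specialize (G1 z H); specialize (H1 z H); lra.
  - intros z H. eapply Rle_trans; [apply Cn_add|]. specialize (G2 z H); specialize (H2 z H); lra.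
  - intros z w H H5. replace (Csub (Cadd (g z) (h z)) (Cadd (g w) (h w))) with (Cadd (Csub (g z) (g w)) (Csub (h z) (h w))) by Cring.
    eapply Rle_trans; [apply Cn_add|]. specialize (G3 z w H H5); specialize (H3 z w H H5); lra.
  - intros z w u H H5 H6. replace (Csub (Csub (Cadd (g z) (h z)) (Cadd (g w) (h w))) (Cmul (Cadd (g' u) (h' u)) (Csub z w)))
      with (Cadd (Csub (Csub (g z) (g w)) (Cmul (g' u) (Csub z w))) (Csub (Csub (h z) (h w)) (Cmul (h' u) (Csub z w)))) by Cring.
    eapply Rle_trans; [apply Cn_add|]. specialize (G4 z w u H H5 H6); specialize (H4 z w u H H5 H6); lra.
Qed.

Lemma Reg_opp R0 g g' K : Reg R0 g g' K ->
  Reg R0 (fun z => Copp (g z)) (fun z => Copp (g' z)) K.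
Proof.
  intros [G0 [G1 [G2 [G3 G4]]]]. repeat split; intros.
  - lra.
  - rewrite Cn_opp; auto.
  - rewrite Cn_opp; auto.
  - replace (Csub (Copp (g z)) (Copp (g w))) with (Copp (Csub (g z) (g w))) by Cring. rewrite Cn_opp; auto.
  - replace (Csub (Csub (Copp (g z)) (Copp (g w))) (Cmul (Copp (g' u)) (Csub z w)))
      with (Copp (Csub (Csub (g z) (g w)) (Cmul (g' u) (Csub z w)))) by Cring. rewrite Cn_opp; auto.
Qed.

Lemma Reg_mul R0 g g' h h' K1 K2 : Reg R0 g g' K1 -> Reg R0 h h' K2 ->
  Reg R0 (fun z => Cmul (g z) (h z)) (fun z => Cadd (Cmul (g' z) (h z)) (Cmul (g z) (h' z))) (4 * K1 * K2).
Proof.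
  intros [G0 [G1 [G2 [G3 G4]]]] [H0 [H1 [H2 [H3 H4]]]]. repeat split.
  - nra.
  - intros z H. rewrite Cn_mul. specialize (G1 z H); specialize (H1 z H).
    pose proof (Cn_nonneg (g z)); pose proof (Cn_nonneg (h z)).
    assert (Cn (g z) * Cn (h z) <= K1 * K2) by (apply Rmult_le_compat; auto). nra.
  - intros z H. eapply Rle_trans; [apply Cn_add|]. rewrite !Cn_mul.
    specialize (G1 z H); specialize (H1 z H); specialize (G2 z H); specialize (H2 z H).
    assert (Cn (g' z) * Cn (h z) <= K1 * K2) by (apply Rmult_le_compat; auto using Cn_nonneg).
    assert (Cn (g z) * Cn (h' z) <= K1 * K2) by (apply Rmult_le_compat; auto using Cn_nonneg).
    nra.
  - intros z w H H5. replace (Csub (Cmul (g z) (h z)) (Cmul (g w) (h w)))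
      with (Cadd (Cmul (g z) (Csub (h z) (h w))) (Cmul (Csub (g z) (g w)) (h w))) by Cring.
    eapply Rle_trans; [apply Cn_add|]. rewrite !Cn_mul.
    specialize (G1 z H); specialize (H1 w H5); specialize (G3 z w H H5); specialize (H3 z w H H5).
    set (D := Cn (Csub z w)). assert (0 <= D) by apply Cn_nonneg.
    assert (Cn (g z) * Cn (Csub (h z) (h w)) <= K1 * (K2 * D)) by (apply Rmult_le_compat; auto using Cn_nonneg).
    assert (Cn (Csub (g z) (g w)) * Cn (h w) <= (K1 * D) * K2) by (apply Rmult_le_compat; auto using Cn_nonneg).
    assert (0 <= K1 * K2 * D) by (repeat apply Rmult_le_pos; auto). nra.
  - intros z w u H H5 H6. set (Dz := Csub z w).
    replace (Csub (Csub (Cmul (g z) (h z)) (Cmul (g w) (h w))) (Cmul (Cadd (Cmul (g' u) (h u)) (Cmul (g u) (h' u))) Dz))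
      with (Cadd (Cadd (Cmul (g z) (Csub (Csub (h z) (h w)) (Cmul (h' u) Dz)))
                       (Cmul (Cmul (Csub (g z) (g u)) (h' u)) Dz))
                 (Cadd (Cmul (Csub (Csub (g z) (g w)) (Cmul (g' u) Dz)) (h w))
                       (Cmul (Cmul (g' u) Dz) (Csub (h w) (h u))))) by (unfold Dz; Cring).
    eapply Rle_trans; [apply Cn_add|].
    apply Rle_trans with ((Cn (Cmul (g z) (Csub (Csub (h z) (h w)) (Cmul (h' u) Dz))) +
                           Cn (Cmul (Cmul (Csub (g z) (g u)) (h' u)) Dz)) +
                          (Cn (Cmul (Csub (Csub (g z) (g w)) (Cmul (g' u) Dz)) (h w)) +
                           Cn (Cmul (Cmul (g' u) Dz) (Csub (h w) (h u))))).
    { apply Rplus_le_compat; apply Cn_add. }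
    rewrite !Cn_mul.
    set (D := Cn Dz). set (a := Cn (Csub z u)). set (b := Cn (Csub w u)).
    assert (0 <= D) by apply Cn_nonneg. assert (0 <= a) by apply Cn_nonneg. assert (0 <= b) by apply Cn_nonneg.
    specialize (G1 z H); specialize (H1 w H5); specialize (G2 u H6); specialize (H2 u H6).
    specialize (G3 z u H H6); specialize (H3 w u H5 H6).
    specialize (G4 z w u H H5 H6); specialize (H4 z w u H H5 H6).
    fold Dz D a b in G3, H3, G4, H4.
    assert (T1 : Cn (g z) * Cn (Csub (Csub (h z) (h w)) (Cmul (h' u) Dz)) <= K1 * (K2 * (D * (a + b))))
      by (apply Rmult_le_compat; auto using Cn_nonneg).
    assert (T2 : Cn (Csub (g z) (g u)) * Cn (h' u) * D <= (K1 * a) * K2 * D).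
    { apply Rmult_le_compat_r; auto. apply Rmult_le_compat; auto using Cn_nonneg. }
    assert (T3 : Cn (Csub (Csub (g z) (g w)) (Cmul (g' u) Dz)) * Cn (h w) <= (K1 * (D * (a + b))) * K2)
      by (apply Rmult_le_compat; auto using Cn_nonneg).
    assert (T4 : Cn (g' u) * D * Cn (Csub (h w) (h u)) <= (K1 * D) * (K2 * b)).
    { apply Rmult_le_compat; auto using Cn_nonneg.
      - apply Rmult_le_pos; auto using Cn_nonneg.
      - apply Rmult_le_compat_r; auto. }
    assert (K1 * K2 * D * a <= K1 * K2 * D * (a + b)).
    { apply Rmult_le_compat_l; [|lra]. apply Rmult_le_pos; auto. apply Rmult_le_pos; auto. }
    assert (K1 * K2 * D * b <= K1 * K2 * D * (a + b)).
    { apply Rmult_le_compat_l; [|lra]. apply Rmult_le_pos; auto. apply Rmult_le_pos; auto. }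
    nra.
Qed.

Lemma Reg_fold R0 (F F' : nat -> C -> C) K l : 0 <= K ->
  (forall j, In j l -> Reg R0 (F j) (F' j) K) ->
  Reg R0 (fun z => fold_right (fun j acc => Cadd (F j z) acc) C0 l)
         (fun z => fold_right (fun j acc => Cadd (F' j z) acc) C0 l) (INR (length l) * K).
Proof.
  intros HK. induction l as [|a l IH]; intros H; cbn [fold_right length].
  - eapply Reg_mono; [|apply (Reg_const R0 C0)]. rewrite Cn_C0. simpl; lra.
  - rewrite S_INR.
    replace ((INR (length l) + 1) * K) with (K + INR (length l) * K) by ring.
    apply (Reg_add R0 (F a) (F' a) (fun z => fold_right (fun j acc => Cadd (F j z) acc) C0 l)).
    + apply H; left; auto.
    + apply IH; intros; apply H; right; auto.
Qed.

Lemma Reg_sum R0 (F F' : nat -> C -> C) K n : 0 <= K ->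
  (forall j, (j < n)%nat -> Reg R0 (F j) (F' j) K) ->
  Reg R0 (fun z => Csum (fun j => F j z) n) (fun z => Csum (fun j => F' j z) n) (INR n * K).
Proof.
  intros HK H. unfold Csum. replace (INR n * K) with (INR (length (seq 0 n)) * K) by (rewrite length_seq; auto).
  apply Reg_fold; auto.
  intros j Hj; apply in_seq in Hj; apply H; lia.
Qed.

Fixpoint ddet (n : nat) (A A' : nat -> nat -> C) : C :=
  match n with
  | O => C0
  | S m => Csum (fun j => Cadd (Cmul C0 (Cmul (A 0%nat j) (det m (minor A 0 j))))
                  (Cmul (sgn j) (Cadd (Cmul (A' 0%nat j) (det m (minor A 0 j)))
                                      (Cmul (A 0%nat j) (ddet m (minor A 0 j) (minor A' 0 j)))))) (S m)
  end.

Fixpoint DK (n : nat) (K : R) : R :=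
  match n with
  | O => 1
  | S m => INR (S m) * (4 * 1 * (4 * K * DK m K))
  end.

Lemma DK_nonneg n K : 0 <= K -> 0 <= DK n K.
Proof.
  intros HK; induction n; cbn [DK]; [lra|].
  apply Rmult_le_pos; [apply pos_INR|]. nra.
Qed.

Lemma Reg_det R0 n : forall (A A' : C -> nat -> nat -> C) K, 0 <= K ->
  (forall i j, (i < n)%nat -> (j < n)%nat -> Reg R0 (fun z => A z i j) (fun z => A' z i j) K) ->
  Reg R0 (fun z => det n (A z)) (fun z => ddet n (A z) (A' z)) (DK n K).
Proof.
  induction n as [|m IH]; intros A A' K HK H.
  - cbn [det ddet DK]. eapply Reg_mono; [|apply Reg_const]. rewrite Cn_C1; lra.
  - cbn [det ddet DK].
    apply (Reg_sum R0
      (fun j z => Cmul (sgn j) (Cmul (A z 0%nat j) (det m (minor (A z) 0 j))))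
      (fun j z => Cadd (Cmul C0 (Cmul (A z 0%nat j) (det m (minor (A z) 0 j))))
                  (Cmul (sgn j) (Cadd (Cmul (A' z 0%nat j) (det m (minor (A z) 0 j)))
                                      (Cmul (A z 0%nat j) (ddet m (minor (A z) 0 j) (minor (A' z) 0 j))))))).
    + pose proof (DK_nonneg m K HK). nra.
    + intros j Hj. apply Reg_mono with (4 * Cn (sgn j) * (4 * K * DK m K)); [rewrite Cn_sgn; lra|].
      apply (Reg_mul R0 (fun _ => sgn j) (fun _ => C0)).
      * apply Reg_const.
      * apply (Reg_mul R0 (fun z => A z 0%nat j) (fun z => A' z 0%nat j)
                (fun z => det m (minor (A z) 0 j)) (fun z => ddet m (minor (A z) 0 j) (minor (A' z) 0 j))).
        -- apply H; lia.
        -- apply (IH (fun z => minor (A z) 0 j) (fun z => minor (A' z) 0 j) K HK).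
           intros i k Hi Hk. unfold minor. apply H; apply skip_lt; auto.
Qed.


Lemma Rabs_le_inv a b : Rabs a <= b -> -b <= a <= b.
Proof. intros H. pose proof (Rle_abs a). pose proof (Rle_abs (-a)). rewrite Rabs_Ropp in H1. lra. Qed.

Lemma exp_mono a b : a <= b -> exp a <= exp b.
Proof. intros H; destruct (Req_dec a b); [subst; lra|]. left; apply exp_increasing; lra. Qed.

Lemma exp_small a : Rabs a <= 1/2 ->
  exp a <= 2 /\ Rabs (exp a - 1 - a) <= 2 * (a * a) /\ Rabs (exp a - 1) <= 2 * Rabs a.
Proof.
  intros Ha.
  assert (Hab : -(1/2) <= a <= 1/2) by (apply Rabs_le_inv in Ha; lra) .
  pose proof (exp_ineq1_le a). pose proof (exp_ineq1_le (-a)).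
  assert (E : exp a * exp (-a) = 1) by (rewrite <- exp_plus; replace (a + - a) with 0 by ring; apply exp_0).
  pose proof (exp_pos a). pose proof (exp_pos (-a)).
  assert (H3 : exp a * (1 - a) <= 1) by nra.
  assert (He2 : exp a <= 2) by nra.
  assert (Hup : exp a - 1 - a <= 2 * (a * a)).
  { destruct (Rle_or_lt 0 a).
    - assert (exp a - 1 <= a * exp a) by nra. nra.
    - nra. }
  split; [auto|split].
  - rewrite Rabs_pos_eq; lra.
  - destruct (Rle_or_lt 0 a).
    + rewrite (Rabs_pos_eq a) by lra. rewrite Rabs_pos_eq by lra. nra.
    + rewrite (Rabs_left a) by lra. apply Rabs_le. split; nra.
Qed.

Lemma sa1 b : sin_approx b 1 = b - b^3/6.
Proof. unfold sin_approx, sin_term. simpl. field. Qed.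
Lemma sa2 b : sin_approx b 2 = b - b^3/6 + b^5/120.
Proof. unfold sin_approx, sin_term. simpl. field. Qed.

Lemma sin_small_pos b : 0 <= b <= 1/2 -> b - b * b <= sin b <= b.
Proof.
  intros Hb. destruct (pre_sin_bound b 0) as [H1 H2]; try lra.
  change (2 * 0 + 1)%nat with 1%nat in H1. change (2 * (0 + 1))%nat with 2%nat in H2.
  rewrite sa1 in H1. rewrite sa2 in H2.
  assert (b^3 <= b * b) by (simpl; nra). assert (b^5 <= b^3) by (simpl; nra).
  assert (0 <= b^5) by (apply pow_le; lra).
  split; lra.
Qed.

Lemma sin_small b : Rabs b <= 1/2 -> Rabs (sin b - b) <= b * b /\ Rabs (sin b) <= Rabs b.
Proof.
  intros Hb. apply Rabs_le_inv in Hb.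
  destruct (Rle_or_lt 0 b).
  - pose proof (sin_small_pos b ltac:(lra)).
    split; [apply Rabs_le; split; nra|]. rewrite (Rabs_pos_eq b) by lra. apply Rabs_le; nra.
  - pose proof (sin_small_pos (-b) ltac:(lra)). rewrite sin_neg in H0.
    split; [apply Rabs_le; split; nra|]. rewrite (Rabs_left b) by lra. apply Rabs_le; nra.
Qed.

Lemma cos_small b : Rabs b <= 1/2 -> Rabs (cos b - 1) <= b * b.
Proof.
  intros Hb. replace b with (2 * (b/2)) at 1 by field. rewrite cos_2a_sin.
  destruct (sin_small (b/2)) as [_ H]. { apply Rabs_le_inv in Hb; apply Rabs_le; lra. }
  assert (Rabs (sin (b/2)) * Rabs (sin (b/2)) <= Rabs (b/2) * Rabs (b/2)).
  { apply Rmult_le_compat; auto using Rabs_pos. }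
  rewrite <- !Rabs_mult in H0. rewrite !Rabs_pos_eq in H0 by nra.
  replace (1 - 2 * sin (b / 2) * sin (b / 2) - 1) with (- (2 * (sin (b/2) * sin (b/2)))) by ring.
  rewrite Rabs_Ropp. rewrite Rabs_pos_eq by nra. nra.
Qed.

Definition ce (a : C) : C := (exp (fst a) * cos (snd a), exp (fst a) * sin (snd a)).

Lemma ce_add a b : ce (Cadd a b) = Cmul (ce a) (ce b).
Proof.
  unfold ce, Cadd, Cmul; simpl. rewrite exp_plus, cos_plus, sin_plus. apply Cext; simpl; ring.
Qed.

Lemma Cn_ce a : Cn (ce a) = exp (fst a).
Proof.
  unfold Cnorm, ce; simpl. pose proof (sin2_cos2 (snd a)). unfold Rsqr in H.
  replace (exp (fst a) * cos (snd a) * (exp (fst a) * cos (snd a)) +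
   exp (fst a) * sin (snd a) * (exp (fst a) * sin (snd a))) with (exp (fst a) * exp (fst a))
   by (transitivity (exp (fst a) * exp (fst a) * (sin (snd a) * sin (snd a) + cos (snd a) * cos (snd a))); [rewrite H; ring|ring]).
  apply sqrt_square. left; apply exp_pos.
Qed.

Definition cc (rho : R) : R := 5 + 4 * (exp rho + 1 + rho).

Lemma ce_est rho z : Cn z <= rho ->
  Cn (Csub (ce z) C1) <= cc rho * Cn z /\
  Cn (Csub (Csub (ce z) C1) z) <= cc rho * (Cn z * Cn z).
Proof.
  intros Hz. pose proof (Cn_nonneg z) as Hn. pose proof (exp_pos rho).
  assert (Hcc : 5 <= cc rho) by (unfold cc; lra).
  destruct (Rle_or_lt (Cn z) (1/2)) as [Hs|Hl].
  - pose proof (Cn_fst z); pose proof (Cn_snd z).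
    destruct z as [a b]; simpl in *.
    destruct (exp_small a) as [E1 [E2 E3]]; [lra|].
    destruct (sin_small b) as [S1 S2]; [lra|].
    pose proof (cos_small b ltac:(lra)) as C2.
    pose proof (Cn_sq (a, b)); simpl in H2.
    pose proof (Rabs_pos a); pose proof (Rabs_pos b).
    pose proof (exp_pos a).
    pose proof (COS_bound b). pose proof (SIN_bound b).
    split.
    + eapply Rle_trans; [apply Cn_le_l1|]. unfold ce, Csub, Cadd, Copp, C1; simpl.
      replace (exp a * cos b + Ropp 1) with ((exp a - 1) * cos b + (cos b - 1)) by ring.
      replace (exp a * sin b + Ropp 0) with (exp a * sin b) by ring.
      assert (Rabs ((exp a - 1) * cos b) <= 2 * Rabs a).
      { rewrite Rabs_mult. assert (Rabs (cos b) <= 1) by (apply Rabs_le; lra).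
        pose proof (Rabs_pos (cos b)). nra. }
      assert (Rabs (exp a * sin b) <= 2 * Rabs b).
      { rewrite Rabs_mult, (Rabs_pos_eq (exp a)) by lra. pose proof (Rabs_pos (sin b)). nra. }
      pose proof (Rabs_triang ((exp a - 1) * cos b) (cos b - 1)).
      assert (Hbb : b * b = Rabs b * Rabs b) by (rewrite <- Rabs_mult; symmetry; apply Rabs_pos_eq; nra).
      assert (b * b <= Rabs b) by nra.
      assert (5 * Cn (a,b) <= cc rho * Cn (a,b)) by (apply Rmult_le_compat_r; lra).
      lra.
    + eapply Rle_trans; [apply Cn_le_l1|]. unfold ce, Csub, Cadd, Copp, C1; simpl.
      replace (exp a * cos b + Ropp 1 + - a) with ((exp a - 1 - a) + exp a * (cos b - 1)) by ring.
      replace (exp a * sin b + Ropp 0 + - b) with ((exp a - 1) * sin b + (sin b - b)) by ring.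
      pose proof (Rabs_triang (exp a - 1 - a) (exp a * (cos b - 1))).
      pose proof (Rabs_triang ((exp a - 1) * sin b) (sin b - b)).
      assert (Rabs (exp a * (cos b - 1)) <= 2 * (b * b)).
      { rewrite Rabs_mult, (Rabs_pos_eq (exp a)) by lra. pose proof (Rabs_pos (cos b - 1)). nra. }
      assert (Rabs ((exp a - 1) * sin b) <= 2 * Rabs a * Rabs b).
      { rewrite Rabs_mult. pose proof (Rabs_pos (sin b)). pose proof (Rabs_pos (exp a - 1)). nra. }
      assert (2 * Rabs a * Rabs b <= a * a + b * b).
      { pose proof (Rle_0_sqr (Rabs a - Rabs b)). unfold Rsqr in H12.
        assert (Rabs a * Rabs a = a * a) by (rewrite <- Rabs_mult; apply Rabs_pos_eq; nra).
        assert (Rabs b * Rabs b = b * b) by (rewrite <- Rabs_mult; apply Rabs_pos_eq; nra). nra. }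
      assert (0 <= a * a + b * b) by nra.
      assert (Hsq : Cn (a,b) * Cn (a,b) = a * a + b * b) by (rewrite H2; ring).
      assert (5 * (Cn (a,b) * Cn (a,b)) <= cc rho * (Cn (a,b) * Cn (a,b))) by (apply Rmult_le_compat_r; nra).
      assert (0 <= a * a) by nra. assert (0 <= b * b) by nra.
      lra.
  - assert (Hce : Cn (ce z) <= exp rho).
    { rewrite Cn_ce. apply exp_mono. pose proof (Cn_fst z). apply Rabs_le_inv in H0. lra. }
    split.
    + eapply Rle_trans; [apply Cn_sub|]. rewrite Cn_C1.
      assert (exp rho + 1 <= cc rho * (1/2)) by (unfold cc; pose proof (Cn_nonneg z); lra).
      assert (cc rho * (1/2) <= cc rho * Cn z) by (apply Rmult_le_compat_l; lra). lra.
    + eapply Rle_trans; [apply Cn_sub|]. eapply Rle_trans; [apply Rplus_le_compat_r; apply Cn_sub|]. rewrite Cn_C1.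
      assert (exp rho + 1 + rho <= cc rho * (1/4)) by (unfold cc; lra).
      assert (1/4 <= Cn z * Cn z) by nra.
      assert (cc rho * (1/4) <= cc rho * (Cn z * Cn z)) by (apply Rmult_le_compat_l; lra). lra.
Qed.


Definition Et (t : R) (z : C) : C :=
  (exp (fst z * t) * cos (snd z * t), exp (fst z * t) * sin (snd z * t)).

Lemma Et_ce t z : Et t z = ce (Cmul z (RtoC t)).
Proof.
  unfold Et, ce, Cmul, RtoC; simpl.
  replace (fst z * t - snd z * 0) with (fst z * t) by ring.
  replace (fst z * 0 + snd z * t) with (snd z * t) by ring. reflexivity.
Qed.

Lemma Et_mul t z w : Et t z = Cmul (Et t w) (ce (Cmul (Csub z w) (RtoC t))).
Proof.
  rewrite !Et_ce, <- ce_add. f_equal. Cring.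
Qed.

Lemma Cn_Et t z : Cn (Et t z) = exp (fst z * t).
Proof. rewrite Et_ce, Cn_ce. unfold Cmul, RtoC; simpl. f_equal; ring. Qed.

Lemma Et_bound tau R0 t z : 0 <= tau -> -tau <= t <= 0 -> Cn z <= R0 -> Cn (Et t z) <= exp (R0 * tau).
Proof.
  intros Ht Ht2 Hz. rewrite Cn_Et. apply exp_mono.
  pose proof (Cn_fst z). pose proof (Rle_abs (fst z * t)). rewrite Rabs_mult in H0.
  rewrite (Rabs_left1 t) in H0 by lra. pose proof (Rabs_pos (fst z)). nra.
Qed.

Lemma Et_bound0 t z : t <= 0 -> 0 <= fst z -> Cn (Et t z) <= 1.
Proof.
  intros. rewrite Cn_Et. rewrite <- exp_0. apply exp_mono. nra.
Qed.

Lemma Cn_scal_t tau t a : -tau <= t <= 0 -> Cn (Cmul a (RtoC t)) <= Cn a * tau.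
Proof.
  intros Ht. rewrite Cn_mul, Cn_RtoC. rewrite Rabs_left1 by lra.
  apply Rmult_le_compat_l; [apply Cn_nonneg|lra].
Qed.

Lemma Et_lip tau R0 t z w : 0 <= tau -> -tau <= t <= 0 -> Cn z <= R0 -> Cn w <= R0 ->
  Cn (Csub (Et t z) (Et t w)) <= exp (R0 * tau) * cc (2 * R0 * tau) * tau * Cn (Csub z w).
Proof.
  intros Htau Ht Hz Hw.
  rewrite (Et_mul t z w).
  replace (Csub (Cmul (Et t w) (ce (Cmul (Csub z w) (RtoC t)))) (Et t w))
    with (Cmul (Et t w) (Csub (ce (Cmul (Csub z w) (RtoC t))) C1)) by Cring.
  rewrite Cn_mul.
  pose proof (Cn_scal_t tau t (Csub z w) Ht) as Hs.
  assert (Hd : Cn (Csub z w) <= 2 * R0) by (pose proof (Cn_sub z w); lra).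
  assert (Hr : Cn (Cmul (Csub z w) (RtoC t)) <= 2 * R0 * tau) by nra.
  destruct (ce_est _ _ Hr) as [E1 _].
  pose proof (Et_bound tau R0 t w Htau Ht Hw).
  assert (0 <= cc (2 * R0 * tau)) by (unfold cc; pose proof (exp_pos (2 * R0 * tau)); pose proof (Cn_nonneg z); nra).
  apply Rle_trans with (exp (R0 * tau) * (cc (2 * R0 * tau) * (Cn (Csub z w) * tau))).
  - apply Rmult_le_compat; auto using Cn_nonneg.
    eapply Rle_trans; [apply E1|]. apply Rmult_le_compat_l; auto.
  - lra.
Qed.

Lemma Et_rem tau R0 t z w u : 0 <= tau -> -tau <= t <= 0 -> Cn z <= R0 -> Cn w <= R0 -> Cn u <= R0 ->
  Cn (Csub (Csub (Et t z) (Et t w)) (Cmul (Cmul (RtoC t) (Et t u)) (Csub z w)))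
  <= 2 * exp (R0 * tau) * cc (2 * R0 * tau) * (tau * tau) * (Cn (Csub z w) * (Cn (Csub z u) + Cn (Csub w u))).
Proof.
  intros Htau Ht Hz Hw Hu.
  set (e := exp (R0 * tau)). set (k := cc (2 * R0 * tau)).
  assert (Hk : 0 <= k) by (unfold k, cc; pose proof (exp_pos (2 * R0 * tau)); pose proof (Cn_nonneg z); nra).
  assert (He : 0 <= e) by (unfold e; left; apply exp_pos).
  rewrite (Et_mul t z w).
  set (Y := ce (Cmul (Csub z w) (RtoC t))).
  replace (Csub (Csub (Cmul (Et t w) Y) (Et t w)) (Cmul (Cmul (RtoC t) (Et t u)) (Csub z w)))
    with (Cadd (Cmul (Et t w) (Csub (Csub Y C1) (Cmul (Csub z w) (RtoC t))))
               (Cmul (Cmul (RtoC t) (Csub (Et t w) (Et t u))) (Csub z w))) by (unfold Y; Cring).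
  eapply Rle_trans; [apply Cn_add|]. rewrite !Cn_mul, Cn_RtoC, (Rabs_left1 t) by lra.
  pose proof (Cn_scal_t tau t (Csub z w) Ht) as Hs.
  assert (Hd : Cn (Csub z w) <= 2 * R0) by (pose proof (Cn_sub z w); lra).
  assert (Hr : Cn (Cmul (Csub z w) (RtoC t)) <= 2 * R0 * tau) by nra.
  destruct (ce_est _ _ Hr) as [_ E2]. fold Y k in E2.
  pose proof (Et_bound tau R0 t w Htau Ht Hw). fold e in H.
  pose proof (Et_lip tau R0 t w u Htau Ht Hw Hu). fold e k in H0.
  set (D := Cn (Csub z w)). set (a := Cn (Csub z u)). set (b := Cn (Csub w u)).
  fold D in Hs, E2.
  assert (0 <= D) by apply Cn_nonneg. assert (0 <= a) by apply Cn_nonneg. assert (0 <= b) by apply Cn_nonneg.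
  assert (HD : D <= a + b).
  { unfold D, a, b. pose proof (Cn_tri z u w). rewrite (Cn_sub_sym u w) in H4. lra. }
  set (Z := Cn (Cmul (Csub z w) (RtoC t))) in *.
  assert (0 <= Z) by apply Cn_nonneg.
  assert (T1 : Cn (Et t w) * Cn (Csub (Csub Y C1) (Cmul (Csub z w) (RtoC t))) <= e * (k * ((D * tau) * (D * tau)))).
  { apply Rmult_le_compat; auto using Cn_nonneg. eapply Rle_trans; [apply E2|].
    apply Rmult_le_compat_l; auto. apply Rmult_le_compat; auto. }
  assert (T2 : - t * Cn (Csub (Et t w) (Et t u)) * D <= tau * (e * k * tau * b) * D).
  { apply Rmult_le_compat_r; auto. apply Rmult_le_compat; try lra; auto using Cn_nonneg. }
  assert (X1 : e * (k * ((D * tau) * (D * tau))) = (e * k * (tau * tau)) * (D * D)) by ring.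
  assert (X2 : tau * (e * k * tau * b) * D = (e * k * (tau * tau)) * (D * b)) by ring.
  assert (P : 0 <= e * k * (tau * tau)) by (apply Rmult_le_pos; [apply Rmult_le_pos|]; nra).
  assert (D * D + D * b <= 2 * (D * (a + b))) by nra.
  assert ((e * k * (tau * tau)) * (D * D + D * b) <= (e * k * (tau * tau)) * (2 * (D * (a + b)))) by (apply Rmult_le_compat_l; auto).
  lra.
Qed.


Section LS.
Variable tau : R.
Variable N : nat.
Variable L : (R -> nat -> R) -> nat -> R.
Hypothesis Htau : 0 < tau.
Hypothesis HL : bounded_linear_op tau N L.

Definition wrap (j : nat) (g : R -> R) : R -> nat -> R := fun t k => if Nat.eqb k j then g t else 0.

Lemma cont_wrap j g : continuity g -> cont_on tau N (wrap j g).
Proof.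
  intros Hg k Hk t Ht e He. unfold wrap. destruct (Nat.eqb k j).
  - destruct (Hg t e He) as [d [Hd H]]. exists d; split; auto.
    intros s Hs Hst. destruct (Req_dec s t).
    + subst. rewrite Rminus_diag, Rabs_R0. lra.
    + apply (H s). split; [split; [constructor|auto]|auto].
  - exists 1. split; [lra|]. intros. rewrite Rminus_diag, Rabs_R0. lra.
Qed.

Lemma cont_add f g : cont_on tau N f -> cont_on tau N g -> cont_on tau N (fun t k => f t k + g t k).
Proof.
  intros Hf Hg k Hk t Ht e He.
  destruct (Hf k Hk t Ht (e/2) ltac:(lra)) as [d1 [Hd1 H1]].
  destruct (Hg k Hk t Ht (e/2) ltac:(lra)) as [d2 [Hd2 H2]].
  exists (Rmin d1 d2). split; [apply Rmin_pos; auto|].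
  intros s Hs Hst. pose proof (Rmin_l d1 d2); pose proof (Rmin_r d1 d2).
  specialize (H1 s Hs ltac:(lra)); specialize (H2 s Hs ltac:(lra)).
  replace (f s k + g s k - (f t k + g t k)) with ((f s k - f t k) + (g s k - g t k)) by ring.
  pose proof (Rabs_triang (f s k - f t k) (g s k - g t k)). lra.
Qed.

Lemma cont_scal c f : cont_on tau N f -> cont_on tau N (fun t k => c * f t k).
Proof.
  intros Hf k Hk t Ht e He.
  destruct (Hf k Hk t Ht (e / (Rabs c + 1))) as [d [Hd H]].
  { apply Rdiv_lt_0_compat; auto. pose proof (Rabs_pos c); lra. }
  exists d. split; auto. intros s Hs Hst. specialize (H s Hs Hst).
  replace (c * f s k - c * f t k) with (c * (f s k - f t k)) by ring.
  rewrite Rabs_mult. pose proof (Rabs_pos c). pose proof (Rabs_pos (f s k - f t k)).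
  assert (Rabs c * Rabs (f s k - f t k) <= Rabs c * (e / (Rabs c + 1))) by (apply Rmult_le_compat_l; lra).
  assert (Rabs c * (e / (Rabs c + 1)) < e).
  { apply Rmult_lt_reg_r with (Rabs c + 1); [lra|].
    replace (Rabs c * (e / (Rabs c + 1)) * (Rabs c + 1)) with (Rabs c * e) by (field; lra). nra. }
  lra.
Qed.

Lemma Ladd f g i : (i < N)%nat -> cont_on tau N f -> cont_on tau N g ->
  L (fun t k => f t k + g t k) i = L f i + L g i.
Proof. intros. destruct HL as [A _]. apply A; auto. Qed.

Lemma Lscal c f i : (i < N)%nat -> cont_on tau N f -> L (fun t k => c * f t k) i = c * L f i.
Proof. intros. destruct HL as [_ [A _]]. apply A; auto. Qed.

Lemma Lcomb5 i a1 a2 a3 a4 a5 f1 f2 f3 f4 f5 : (i < N)%nat ->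
  cont_on tau N f1 -> cont_on tau N f2 -> cont_on tau N f3 -> cont_on tau N f4 -> cont_on tau N f5 ->
  L (fun t k => a1 * f1 t k + a2 * f2 t k + a3 * f3 t k + a4 * f4 t k + a5 * f5 t k) i =
  a1 * L f1 i + a2 * L f2 i + a3 * L f3 i + a4 * L f4 i + a5 * L f5 i.
Proof.
  intros Hi H1 H2 H3 H4 H5.
  pose proof (cont_scal a1 f1 H1). pose proof (cont_scal a2 f2 H2). pose proof (cont_scal a3 f3 H3).
  pose proof (cont_scal a4 f4 H4). pose proof (cont_scal a5 f5 H5).
  rewrite (Ladd (fun t k => a1 * f1 t k + a2 * f2 t k + a3 * f3 t k + a4 * f4 t k) (fun t k => a5 * f5 t k)); auto;
    [| repeat apply cont_add; auto].
  rewrite (Ladd (fun t k => a1 * f1 t k + a2 * f2 t k + a3 * f3 t k) (fun t k => a4 * f4 t k)); auto;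
    [| repeat apply cont_add; auto].
  rewrite (Ladd (fun t k => a1 * f1 t k + a2 * f2 t k) (fun t k => a3 * f3 t k)); auto;
    [| repeat apply cont_add; auto].
  rewrite (Ladd (fun t k => a1 * f1 t k) (fun t k => a2 * f2 t k)); auto.
  rewrite !Lscal; auto.
Qed.

Definition Lc (j i : nat) (G : R -> C) : C :=
  (L (wrap j (fun t => fst (G t))) i, L (wrap j (fun t => snd (G t))) i).

Definition Ccont (G : R -> C) : Prop := continuity (fun t => fst (G t)) /\ continuity (fun t => snd (G t)).

Lemma Lc_lin3 j i G1 G2 G3 c2 c3 : (i < N)%nat -> Ccont G1 -> Ccont G2 -> Ccont G3 ->
  Lc j i (fun t => Cadd (Cadd (G1 t) (Cmul (G2 t) c2)) (Cmul (G3 t) c3)) =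
  Cadd (Cadd (Lc j i G1) (Cmul (Lc j i G2) c2)) (Cmul (Lc j i G3) c3).
Proof.
  intros Hi [A1 B1] [A2 B2] [A3 B3]. unfold Lc. apply Cext; simpl.
  - transitivity (L (fun t k => 1 * wrap j (fun t => fst (G1 t)) t k + fst c2 * wrap j (fun t => fst (G2 t)) t k
       + (- snd c2) * wrap j (fun t => snd (G2 t)) t k + fst c3 * wrap j (fun t => fst (G3 t)) t k
       + (- snd c3) * wrap j (fun t => snd (G3 t)) t k) i).
    + f_equal. apply functional_extensionality; intro t. apply functional_extensionality; intro k.
      unfold wrap. destruct (Nat.eqb k j); simpl; ring.
    + rewrite Lcomb5; try apply cont_wrap; auto. ring.
  - transitivity (L (fun t k => 1 * wrap j (fun t => snd (G1 t)) t k + snd c2 * wrap j (fun t => fst (G2 t)) t k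
       + fst c2 * wrap j (fun t => snd (G2 t)) t k + snd c3 * wrap j (fun t => fst (G3 t)) t k
       + fst c3 * wrap j (fun t => snd (G3 t)) t k) i).
    + f_equal. apply functional_extensionality; intro t. apply functional_extensionality; intro k.
      unfold wrap. destruct (Nat.eqb k j); simpl; ring.
    + rewrite Lcomb5; try apply cont_wrap; auto. ring.
Qed.

Lemma Lc_pt j i G G' : (forall t, G t = G' t) -> Lc j i G = Lc j i G'.
Proof. intros H. f_equal. apply functional_extensionality. auto. Qed.

Lemma L_bound_ex : exists M, 0 <= M /\ forall j i G b, (i < N)%nat -> Ccont G -> 0 <= b ->
  (forall t, -tau <= t <= 0 -> Cn (G t) <= b) -> Cn (Lc j i G) <= M * b.
Proof.
  destruct HL as [_ [_ [M0 HM]]]. exists (2 * Rabs M0). split; [pose proof (Rabs_pos M0); lra|].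
  intros j i G b Hi [A B] Hb HG.
  assert (X : forall g, continuity g -> (forall t, -tau <= t <= 0 -> Rabs (g t) <= b) ->
            Rabs (L (wrap j g) i) <= Rabs M0 * b).
  { intros g Hg Hgb. eapply Rle_trans; [apply (HM _ b); auto|].
    - apply cont_wrap; auto.
    - intros t k Ht Hk. unfold wrap. destruct (Nat.eqb k j); auto. rewrite Rabs_R0; auto.
    - apply Rmult_le_compat_r; auto. apply Rle_abs. }
  eapply Rle_trans; [apply Cn_le_l1|]. unfold Lc; simpl.
  assert (Rabs (L (wrap j (fun t => fst (G t))) i) <= Rabs M0 * b).
  { apply X; auto. intros t Ht. eapply Rle_trans; [apply Cn_fst|]. auto. }
  assert (Rabs (L (wrap j (fun t => snd (G t))) i) <= Rabs M0 * b).
  { apply X; auto. intros t Ht. eapply Rle_trans; [apply Cn_snd|]. auto. }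
  lra.
Qed.

Definition Lder (z : C) (i j : nat) : C := Lc j i (fun t => Cmul (RtoC t) (Et t z)).

Lemma Lexp_Lc z i j : Lexp L z i j = Lc j i (fun t => Et t z).
Proof. reflexivity. Qed.

Lemma Ccont_Et z : Ccont (fun t => Et t z).
Proof. unfold Ccont, Et; simpl; split; reg. Qed.

Lemma Ccont_tEt z : Ccont (fun t => Cmul (RtoC t) (Et t z)).
Proof. unfold Ccont, Et, Cmul, RtoC; simpl; split; reg. Qed.

Lemma Lexp_Reg R0 : 0 <= R0 -> exists K, forall i j, (i < N)%nat ->
  Reg R0 (fun z => Lexp L z i j) (fun z => Lder z i j) K.
Proof.
  intros HR. destruct L_bound_ex as [M [HM HMb]].
  set (e := exp (R0 * tau)). set (k := cc (2 * R0 * tau)).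
  assert (He : 0 < e) by (apply exp_pos).
  assert (Hk : 0 <= k) by (unfold k, cc; pose proof (exp_pos (2 * R0 * tau)); nra).
  set (KE := e * (1 + tau) + e * k * tau + 2 * e * k * (tau * tau)).
  assert (P1 : 0 <= e * k * tau) by (apply Rmult_le_pos; [apply Rmult_le_pos|]; lra).
  assert (P2 : 0 <= 2 * e * k * (tau * tau)) by (apply Rmult_le_pos; [|nra]; apply Rmult_le_pos; lra).
  exists (M * KE). intros i j Hi.
  assert (HKE1 : e <= KE) by (unfold KE; nra).
  assert (HKE2 : e * tau <= KE) by (unfold KE; nra).
  assert (HKE3 : e * k * tau <= KE) by (unfold KE; nra).
  assert (HKE4 : 2 * e * k * (tau * tau) <= KE) by (unfold KE; nra).
  repeat split.
  - apply Rmult_le_pos; lra.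
  - intros z Hz. rewrite Lexp_Lc. eapply Rle_trans.
    + apply (HMb j i _ e); auto using Ccont_Et; [lra|]. intros t Ht. apply (Et_bound tau R0 t z); auto; lra.
    + apply Rmult_le_compat_l; auto.
  - intros z Hz. unfold Lder. eapply Rle_trans.
    + apply (HMb j i _ (tau * e)); auto using Ccont_tEt; [nra|]. intros t Ht.
      rewrite Cn_mul, Cn_RtoC, Rabs_left1 by lra.
      pose proof (Et_bound tau R0 t z ltac:(lra) Ht Hz). fold e in H.
      apply Rmult_le_compat; try lra; auto using Cn_nonneg.
    + apply Rmult_le_compat_l; auto. nra.
  - intros z w Hz Hw. rewrite !Lexp_Lc.
    replace (Csub (Lc j i (fun t => Et t z)) (Lc j i (fun t => Et t w)))
      with (Cadd (Cadd (Lc j i (fun t => Et t z)) (Cmul (Lc j i (fun t => Et t w)) (RtoC (-1))))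
                 (Cmul (Lc j i (fun t => Et t z)) C0)) by Cring.
    rewrite <- Lc_lin3; auto using Ccont_Et.
    rewrite (Lc_pt j i _ (fun t => Csub (Et t z) (Et t w))) by (intros; Cring).
    eapply Rle_trans.
    + apply (HMb j i _ (e * k * tau * Cn (Csub z w))); auto.
      * unfold Ccont, Csub, Cadd, Copp, Cmul, RtoC, Et; simpl; split; reg.
      * apply Rmult_le_pos; auto using Cn_nonneg.
      * intros t Ht. apply (Et_lip tau R0 t z w); auto; lra.
    + pose proof (Cn_nonneg (Csub z w)).
      assert (e * k * tau * Cn (Csub z w) <= KE * Cn (Csub z w)) by (apply Rmult_le_compat_r; auto).
      assert (M * (e * k * tau * Cn (Csub z w)) <= M * (KE * Cn (Csub z w))) by (apply Rmult_le_compat_l; auto).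
      lra.
  - intros z w u Hz Hw Hu. rewrite !Lexp_Lc. unfold Lder.
    replace (Csub (Csub (Lc j i (fun t => Et t z)) (Lc j i (fun t => Et t w)))
               (Cmul (Lc j i (fun t => Cmul (RtoC t) (Et t u))) (Csub z w)))
      with (Cadd (Cadd (Lc j i (fun t => Et t z)) (Cmul (Lc j i (fun t => Et t w)) (RtoC (-1))))
                 (Cmul (Lc j i (fun t => Cmul (RtoC t) (Et t u))) (Copp (Csub z w)))) by Cring.
    rewrite <- Lc_lin3; auto using Ccont_Et, Ccont_tEt.
    rewrite (Lc_pt j i _ (fun t => Csub (Csub (Et t z) (Et t w)) (Cmul (Cmul (RtoC t) (Et t u)) (Csub z w))))
      by (intros; Cring).
    set (Q := Cn (Csub z w) * (Cn (Csub z u) + Cn (Csub w u))).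
    assert (HQ : 0 <= Q).
    { unfold Q. pose proof (Cn_nonneg (Csub z w)); pose proof (Cn_nonneg (Csub z u)); pose proof (Cn_nonneg (Csub w u)). nra. }
    eapply Rle_trans.
    + apply (HMb j i _ (2 * e * k * (tau * tau) * Q)); auto.
      * unfold Ccont, Csub, Cadd, Copp, Cmul, RtoC, Et; simpl; split; reg.
      * apply Rmult_le_pos; auto.
      * intros t Ht. apply (Et_rem tau R0 t z w u); auto; lra.
    + assert (2 * e * k * (tau * tau) * Q <= KE * Q) by (apply Rmult_le_compat_r; auto).
      assert (M * (2 * e * k * (tau * tau) * Q) <= M * (KE * Q)) by (apply Rmult_le_compat_l; auto).
      unfold Q in *. lra.
Qed.

End LS.


Definition Delta' (L : (R -> nat -> R) -> nat -> R) (eps : R) (z : C) (i j : nat) : C :=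
  Cadd (if Nat.eqb i j then Cadd (Cadd (Cmul C0 (Cmul z z)) (Cmul (RtoC (eps * eps)) (Cadd (Cmul C1 z) (Cmul z C1)))) (Copp C1) else C0)
       (Lder L z i j).

Lemma Delta_Reg tau N L R0 : 0 < tau -> bounded_linear_op tau N L -> 0 <= R0 ->
  exists K, 0 <= K /\ forall eps i j, 0 <= eps <= 1 -> (i < N)%nat ->
    Reg R0 (fun z => Delta L eps z i j) (fun z => Delta' L eps z i j) K.
Proof.
  intros Ht HL HR. destruct (Lexp_Reg tau N L Ht HL R0 HR) as [KL HKL].
  assert (HKL0 : 0 <= KL \/ N = 0%nat).
  { destruct N; [right; auto|left]. destruct (HKL 0%nat 0%nat ltac:(lia)) as [X _]; auto. }
  set (K1 := 4 * 1 * (4 * (R0 + 1) * (R0 + 1)) + (R0 + 1)).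
  exists (K1 + Rabs KL). split.
  { unfold K1. pose proof (Rabs_pos KL). nra. }
  intros eps i j He Hi.
  assert (HKL1 : 0 <= KL) by (destruct HKL0; [auto|lia]).
  rewrite (Rabs_pos_eq KL HKL1).
  unfold Delta, Delta'.
  apply (Reg_add R0 (fun z => if Nat.eqb i j then Csub (Cmul (RtoC (eps * eps)) (Cmul z z)) z else C0)
    (fun z => if Nat.eqb i j then Cadd (Cadd (Cmul C0 (Cmul z z)) (Cmul (RtoC (eps * eps)) (Cadd (Cmul C1 z) (Cmul z C1)))) (Copp C1) else C0)
    (fun z => Lexp L z i j) (fun z => Lder L z i j)); [|apply HKL; auto].
  destruct (Nat.eqb i j).
  - unfold Csub. apply (Reg_add R0 (fun z => Cmul (RtoC (eps * eps)) (Cmul z z))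
       (fun z => Cadd (Cmul C0 (Cmul z z)) (Cmul (RtoC (eps * eps)) (Cadd (Cmul C1 z) (Cmul z C1))))
       (fun z => Copp z) (fun _ => Copp C1)).
    + apply Reg_mono with (4 * Cn (RtoC (eps * eps)) * (4 * (R0 + 1) * (R0 + 1))).
      * rewrite Cn_RtoC, Rabs_pos_eq by nra.
        assert (0 <= 4 * (R0 + 1) * (R0 + 1)) by nra.
        assert (eps * eps <= 1) by nra. nra.
      * apply (Reg_mul R0 (fun _ => RtoC (eps * eps)) (fun _ => C0) (fun z => Cmul z z)
            (fun z => Cadd (Cmul C1 z) (Cmul z C1))).
        -- apply Reg_const.
        -- apply (Reg_mul R0 (fun z => z) (fun _ => C1) (fun z => z) (fun _ => C1)); apply Reg_id; auto.
    + apply (Reg_opp R0 (fun z => z) (fun _ => C1)). apply Reg_id; auto.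
  - apply Reg_mono with (Cn C0); [rewrite Cn_C0; unfold K1; nra|]. apply Reg_const.
Qed.

Lemma charfun_Reg tau N L R0 : 0 < tau -> bounded_linear_op tau N L -> 0 <= R0 ->
  exists K, 0 <= K /\ forall eps, 0 <= eps <= 1 ->
    Reg R0 (fun z => charfun L N eps z) (fun z => ddet N (Delta L eps z) (Delta' L eps z)) (DK N K).
Proof.
  intros Ht HL HR. destruct (Delta_Reg tau N L R0 Ht HL HR) as [K [HK H]].
  exists K. split; auto. intros eps He.
  unfold charfun. apply (Reg_det R0 N (fun z => Delta L eps z) (fun z => Delta' L eps z) K HK).
  intros i j Hi Hj. apply H; auto.
Qed.

Lemma charfun_pert (N : nat) (L : (R -> nat -> R) -> nat -> R) R0 K : 0 <= R0 -> 0 <= K ->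
  (forall eps i j, 0 <= eps <= 1 -> (i < N)%nat -> forall z, Cn z <= R0 -> Cn (Delta L eps z i j) <= K) ->
  forall eps z, 0 <= eps <= 1 -> Cn z <= R0 ->
    Cn (Csub (charfun L N eps z) (charfun L N 0 z)) <= DL N K * (eps * eps * (R0 * R0)).
Proof.
  intros HR HK H eps z He Hz. unfold charfun. apply detLip; auto.
  intros i j Hi Hj. split; [apply H; auto|split; [apply H; auto; lra|]].
  unfold Delta. destruct (Nat.eqb i j).
  - replace (Csub (Cadd (Csub (Cmul (RtoC (eps * eps)) (Cmul z z)) z) (Lexp L z i j))
        (Cadd (Csub (Cmul (RtoC (0 * 0)) (Cmul z z)) z) (Lexp L z i j)))
      with (Cmul (RtoC (eps * eps)) (Cmul z z)) by Cring.
    rewrite !Cn_mul, Cn_RtoC, Rabs_pos_eq by nra.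
    pose proof (Cn_nonneg z).
    apply Rmult_le_compat_l; [nra|]. apply Rmult_le_compat; auto.
  - replace (Csub (Cadd C0 (Lexp L z i j)) (Cadd C0 (Lexp L z i j))) with C0 by Cring.
    rewrite Cn_C0. pose proof (Cn_nonneg z). nra.
Qed.

Lemma charfun_large tau N L : 0 < tau -> bounded_linear_op tau N L ->
  exists Y0, 0 < Y0 /\ forall eps z, 0 <= fst z -> eps * eps * fst z <= 1/2 -> Y0 <= Cn z ->
    charfun L N eps z <> C0.
Proof.
  intros Ht HL. destruct (L_bound_ex tau N L HL) as [M [HM HMb]].
  destruct (detLB N M HM) as [c [T [Hc HT]]].
  exists (2 * Rabs T + 1). split; [pose proof (Rabs_pos T); lra|].
  intros eps z Hx He Hz Hcf.
  set (mu := Csub (Cmul (RtoC (eps * eps)) (Cmul z z)) z).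
  assert (Hmu : Cn z / 2 <= Cn mu).
  { replace mu with (Cmul z (Csub (Cmul (RtoC (eps * eps)) z) C1)) by (unfold mu; Cring).
    rewrite Cn_mul. pose proof (Cn_fst (Csub (Cmul (RtoC (eps * eps)) z) C1)).
    assert (Ef : fst (Csub (Cmul (RtoC (eps * eps)) z) C1) = - (1 - eps * eps * fst z))
      by (unfold Csub, Cadd, Copp, Cmul, RtoC, C1; simpl; ring).
    rewrite Ef in H.
    rewrite Rabs_Ropp, Rabs_pos_eq in H by lra. pose proof (Cn_nonneg z). nra. }
  assert (HT2 : T <= Cn mu) by (pose proof (Rle_abs T); lra).
  specialize (HT mu (fun i j => Lexp L z i j) HT2).
  assert (HB : forall i j, (i < N)%nat -> (j < N)%nat -> Cn (Lexp L z i j) <= M).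
  { intros i j Hi Hj. rewrite Lexp_Lc. replace M with (M * 1) by ring.
    apply HMb; auto using Ccont_Et; [lra|]. intros t Ht2. apply Et_bound0; lra. }
  specialize (HT HB).
  assert (E : det N (shiftD mu (fun i j => Lexp L z i j)) = charfun L N eps z) by reflexivity.
  rewrite E, Hcf, Cn_C0 in HT.
  assert (0 < Cn mu) by (pose proof (Rabs_pos T); lra).
  pose proof (pow_lt (Cn mu) N H). nra.
Qed.


Lemma valadh_use (u : nat -> R) l : ValAdh u l ->
  forall e, 0 < e -> forall N0, exists p, (N0 <= p)%nat /\ Rabs (u p - l) < e.
Proof.
  intros H e He N0. destruct (H (disc l (mkposreal e He)) N0) as [p [Hp Hv]].
  - exists (mkposreal e He). intros x Hx; auto.
  - exists p; split; auto.
Qed.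

Lemma BW2 (z : nat -> C) Y : (forall n, Cn (z n) <= Y) ->
  exists zs, forall eta, 0 < eta -> forall N0, exists n, (N0 <= n)%nat /\ Cn (Csub (z n) zs) < eta.
Proof.
  intros HY.
  destruct (Bolzano_Weierstrass (fun n => fst (z n)) (fun c => -Y <= c <= Y) (compact_P3 (-Y) Y)) as [lx Hlx].
  { intros n. pose proof (Cn_fst (z n)). specialize (HY n). apply Rabs_le_inv. lra. }
  pose proof (valadh_use _ _ Hlx) as Hx.
  assert (Hpick : forall k N0, {p | (N0 <= p)%nat /\ Rabs (fst (z p) - lx) < / (INR k + 1)}).
  { intros k N0. apply constructive_indefinite_description.
    apply Hx. pose proof (pos_INR k). apply Rinv_0_lt_compat. lra. }
  set (pk := fun k N0 => proj1_sig (Hpick k N0)).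
  assert (Hpk : forall k N0, (N0 <= pk k N0)%nat /\ Rabs (fst (z (pk k N0)) - lx) < / (INR k + 1))
    by (intros; unfold pk; apply proj2_sig).
  set (phi := fix phi (k : nat) : nat := match k with O => pk 0%nat 0%nat | S k' => pk (S k') (S (phi k')) end).
  assert (Hphi1 : forall k, (k <= phi k)%nat).
  { induction k; simpl; [lia|]. destruct (Hpk (S k) (S (phi k))) as [A _]. lia. }
  assert (Hphi2 : forall k, Rabs (fst (z (phi k)) - lx) < / (INR k + 1)).
  { destruct k; simpl; apply Hpk. }
  destruct (Bolzano_Weierstrass (fun k => snd (z (phi k))) (fun c => -Y <= c <= Y) (compact_P3 (-Y) Y)) as [ly Hly].
  { intros n. pose proof (Cn_snd (z (phi n))). specialize (HY (phi n)). apply Rabs_le_inv. lra. }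
  pose proof (valadh_use _ _ Hly) as Hy.
  exists (lx, ly). intros eta He N0.
  destruct (archimed_cor1 (eta / 2) ltac:(lra)) as [k0 [Hk0 Hk0p]].
  destruct (Hy (eta / 2) ltac:(lra) (Nat.max N0 k0)) as [k [Hk Hyk]].
  exists (phi k). split; [pose proof (Hphi1 k); lia|].
  eapply Rle_lt_trans; [apply Cn_le_l1|]. unfold Csub, Cadd, Copp; simpl.
  assert (/ (INR k + 1) <= / INR k0).
  { apply Rinv_le_contravar. apply lt_0_INR; auto.
    assert (INR k0 <= INR k) by (apply le_INR; lia). lra. }
  specialize (Hphi2 k). unfold Rminus in *. lra.
Qed.


Lemma Cn_le_sub z w : Cn z <= Cn (Csub z w) + Cn w.
Proof. replace z with (Cadd (Csub z w) w) at 1 by Cring. apply Cn_add. Qed.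

Definition adh (z : nat -> C) (zs : C) : Prop :=
  forall eta, 0 < eta -> forall N0, exists n, (N0 <= n)%nat /\ Cn (Csub (z n) zs) < eta.

Lemma lim_closed (z : nat -> C) zs (P : C -> R) c N0 :
  adh z zs -> (forall x y, P x - P y <= Cn (Csub x y)) ->
  (forall n, (N0 <= n)%nat -> c <= P (z n)) -> c <= P zs.
Proof.
  intros Ha HP Hc. destruct (Rle_or_lt c (P zs)) as [H|H]; auto.
  destruct (Ha (c - P zs) ltac:(lra) N0) as [n [Hn Hz]].
  specialize (Hc n Hn). specialize (HP (z n) zs). lra.
Qed.

Lemma lim_zero (g : C -> C) D R0 Y0 (z : nat -> C) zs :
  0 <= D -> Y0 + 1 <= R0 ->
  (forall x y, Cn x <= R0 -> Cn y <= R0 -> Cn (Csub (g x) (g y)) <= D * Cn (Csub x y)) ->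
  (forall n, Cn (z n) <= Y0) -> adh z zs ->
  (forall e, 0 < e -> exists N0, forall n, (N0 <= n)%nat -> Cn (g (z n)) <= e) ->
  g zs = C0.
Proof.
  intros HD HR HL Hb Ha He.
  destruct (Rle_or_lt (Cn (g zs)) 0) as [H0|H0].
  { apply Cn_zero. pose proof (Cn_nonneg (g zs)); lra. }
  set (gam := Cn (g zs)) in *.
  destruct (He (gam / 2) ltac:(lra)) as [N0 HN0].
  set (eta := Rmin 1 (gam / (2 * (D + 1)))).
  assert (Heta : 0 < eta) by (apply Rmin_pos; [lra|]; apply Rdiv_lt_0_compat; lra).
  destruct (Ha eta Heta N0) as [n [Hn Hz]].
  specialize (HN0 n Hn).
  assert (Hzs : Cn zs <= R0).
  { pose proof (Cn_le_sub zs (z n)). rewrite Cn_sub_sym in H. pose proof (Hb n).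
    pose proof (Rmin_l 1 (gam / (2 * (D + 1)))). fold eta in H2. lra. }
  pose proof (HL zs (z n) Hzs ltac:(pose proof (Hb n); lra)). rewrite Cn_sub_sym in H. rewrite (Cn_sub_sym zs) in H.
  pose proof (Cn_le_sub (g zs) (g (z n))). rewrite (Cn_sub_sym (g zs)) in H1.
  assert (D * Cn (Csub (z n) zs) <= D * eta) by (apply Rmult_le_compat_l; lra).
  assert (D * eta <= D * (gam / (2 * (D + 1)))) by (apply Rmult_le_compat_l; [lra|apply Rmin_r]).
  assert (D * (gam / (2 * (D + 1))) < gam / 2).
  { apply Rmult_lt_reg_r with (2 * (D + 1)); [lra|].
    replace (D * (gam / (2 * (D + 1))) * (2 * (D + 1))) with (D * gam) by (field; lra).
    replace (gam / 2 * (2 * (D + 1))) with (D * gam + gam) by field. lra. }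
  fold gam in H1. lra.
Qed.

Lemma P_fst : forall x y, fst x - fst y <= Cn (Csub x y).
Proof.
  intros. pose proof (Cn_fst (Csub x y)).
  assert (E : fst (Csub x y) = fst x - fst y) by (unfold Csub, Cadd, Copp; simpl; ring).
  rewrite E in H. pose proof (Rle_abs (fst x - fst y)). lra.
Qed.

Lemma P_mfst : forall x y, (- fst x) - (- fst y) <= Cn (Csub x y).
Proof.
  intros. pose proof (Cn_fst (Csub x y)).
  assert (E : fst (Csub x y) = fst x - fst y) by (unfold Csub, Cadd, Copp; simpl; ring).
  rewrite E in H. pose proof (Rle_abs (- (fst x - fst y))). rewrite Rabs_Ropp in H0. lra.
Qed.

Lemma P_dist l : forall x y, Cn (Csub x l) - Cn (Csub y l) <= Cn (Csub x y).
Proof. intros. pose proof (Cn_tri x y l). lra. Qed.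

Lemma P_mnorm : forall x y, - Cn x - - Cn y <= Cn (Csub x y).
Proof. intros. pose proof (Cn_le_sub y x). rewrite Cn_sub_sym in H. lra. Qed.


Theorem lemma4p1 (N : nat) (tau : R) (L : (R -> nat -> R) -> nat -> R)
    (lam0 : R) (lam : R -> R) :
  0 < tau ->
  bounded_linear_op tau N L ->
  0 < lam0 ->
  charfun L N 0 (RtoC lam0) = C0 ->
  (exists d, Cderiv (charfun L N 0) (RtoC lam0) d /\ d <> C0) ->
  (forall z, charfun L N 0 z = C0 -> z <> RtoC lam0 -> fst z < lam0) ->
  (exists eta, 0 < eta /\
     forall eps, 0 < eps < eta -> charfun L N eps (RtoC (lam eps)) = C0) ->
  (forall e, 0 < e -> exists r, 0 < r /\
     forall eps, 0 < eps < r -> Rabs (lam eps - lam0) < e) ->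
  exists dstar, 0 < dstar /\
    forall delta, 0 < delta < dstar ->
    forall delta1, 0 < delta1 ->
    exists eps0, 0 < eps0 /\
      forall eps, 0 < eps < eps0 ->
        (lam0 - delta <= lam eps <= lam0 + delta1) /\
        (forall z, charfun L N eps z = C0 ->
           lam0 - delta <= fst z <= lam0 + delta1 -> z = RtoC (lam eps)).
Proof.
  intros Htau HL Hl0 Hroot [d [Hd Hd0]] Hdom [eta [Heta Hlam]] Hconv.
  set (l := RtoC lam0).
  assert (Hln : Cn l = lam0) by (unfold l; rewrite Cn_RtoC; apply Rabs_pos_eq; lra).
  destruct (charfun_large tau N L Htau HL) as [Y0 [HY0 Hlarge]].
  set (R0 := Y0 + lam0 + 2).
  assert (HR0 : 0 <= R0) by (unfold R0; lra).
  destruct (Delta_Reg tau N L R0 Htau HL HR0) as [Kd [HKd HDreg]].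
  set (D := DK N Kd).
  assert (HD : 0 <= D) by (apply DK_nonneg; auto).
  set (F := fun eps z => ddet N (Delta L eps z) (Delta' L eps z)).
  assert (Hreg : forall eps, 0 <= eps <= 1 -> Reg R0 (fun z => charfun L N eps z) (F eps) D).
  { intros eps He. unfold charfun, F, D.
    apply (Reg_det R0 N (fun z => Delta L eps z) (fun z => Delta' L eps z) Kd HKd).
    intros i j Hi Hj. apply HDreg; auto. }
  set (Cp := DL N Kd * (R0 * R0)).
  assert (HCp : 0 <= Cp) by (unfold Cp; apply Rmult_le_pos; [apply DL_nonneg; auto|nra]).
  assert (Hpert : forall eps z, 0 <= eps <= 1 -> Cn z <= R0 ->
            Cn (Csub (charfun L N eps z) (charfun L N 0 z)) <= Cp * (eps * eps)).
  { intros eps z He Hz. unfold Cp.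
    replace (DL N Kd * (R0 * R0) * (eps * eps)) with (DL N Kd * (eps * eps * (R0 * R0))) by ring.
    apply charfun_pert; auto.
    intros eps' i j He' Hi z' Hz'. destruct (HDreg eps' i j He' Hi) as [_ [X _]]. apply X; auto. }
  set (dd := Cn d).
  assert (Hdd : 0 < dd).
  { destruct (Rle_or_lt dd 0) as [X|X]; auto. exfalso. apply Hd0. apply Cn_zero.
    pose proof (Cn_nonneg d). unfold dd in X. lra. }
  assert (HA : Cn (Csub (F 0 l) d) <= dd / 4).
  { destruct (Hd (dd / 8) ltac:(lra)) as [r [Hr Hrr]].
    set (hh := Rmin (r / 2) (Rmin (dd / (8 * (D + 1))) (1 / 2))).
    pose proof (Rmin_l (r / 2) (Rmin (dd / (8 * (D + 1))) (1 / 2))).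
    pose proof (Rmin_r (r / 2) (Rmin (dd / (8 * (D + 1))) (1 / 2))).
    pose proof (Rmin_l (dd / (8 * (D + 1))) (1 / 2)). pose proof (Rmin_r (dd / (8 * (D + 1))) (1 / 2)).
    fold hh in H, H0.
    assert (Hh : 0 < hh) by (unfold hh; repeat apply Rmin_pos; try lra; apply Rdiv_lt_0_compat; lra).
    set (h := RtoC hh).
    assert (Hhn : Cn h = hh) by (unfold h; rewrite Cn_RtoC; apply Rabs_pos_eq; lra).
    specialize (Hrr h ltac:(lra)).
    destruct (Hreg 0 ltac:(lra)) as [_ [_ [_ [_ Hrem]]]].
    assert (Hlh : Cn (Cadd l h) <= R0) by (pose proof (Cn_add l h); unfold R0; lra).
    assert (Hl : Cn l <= R0) by (unfold R0; lra).
    specialize (Hrem (Cadd l h) l l Hlh Hl Hl). cbv beta in Hrem.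
    replace (Csub (Cadd l h) l) with h in Hrem by Cring.
    replace (Csub l l) with C0 in Hrem by Cring. rewrite Cn_C0, Hhn in Hrem.
    rewrite Hhn in Hrr. change (RtoC lam0) with l in Hrr.
    assert (Cn (Cmul (Csub (F 0 l) d) h) <= dd / 8 * hh + D * (hh * (hh + 0))).
    { replace (Cmul (Csub (F 0 l) d) h) with
        (Csub (Csub (Csub (charfun L N 0 (Cadd l h)) (charfun L N 0 l)) (Cmul d h))
              (Csub (Csub (charfun L N 0 (Cadd l h)) (charfun L N 0 l)) (Cmul (F 0 l) h))) by Cring.
      eapply Rle_trans; [apply Cn_sub|]. lra. }
    rewrite Cn_mul, Hhn in H3.
    assert (D * hh <= dd / 8).
    { assert (D * hh <= D * (dd / (8 * (D + 1)))) by (apply Rmult_le_compat_l; lra).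
      assert (D * (dd / (8 * (D + 1))) <= dd / 8).
      { apply Rmult_le_reg_r with (8 * (D + 1)); [lra|].
        replace (D * (dd / (8 * (D + 1))) * (8 * (D + 1))) with (D * dd) by (field; lra).
        replace (dd / 8 * (8 * (D + 1))) with (D * dd + dd) by field. lra. }
      lra. }
    assert (Cn (Csub (F 0 l) d) * hh <= (dd / 4) * hh) by nra.
    apply Rmult_le_reg_r with hh; auto. }
  assert (HB : exists epsB, 0 < epsB <= 1 /\ forall eps, 0 <= eps <= epsB -> dd / 2 <= Cn (F eps l)).
  { set (rho := Rmin (1 / 2) (dd / (16 * (D + 1)))).
    pose proof (Rmin_l (1 / 2) (dd / (16 * (D + 1)))). pose proof (Rmin_r (1 / 2) (dd / (16 * (D + 1)))).
    fold rho in H, H0.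
    assert (Hrho : 0 < rho) by (unfold rho; apply Rmin_pos; [lra|]; apply Rdiv_lt_0_compat; lra).
    set (epsB := Rmin 1 (dd * rho / (16 * (Cp + 1)))).
    pose proof (Rmin_l 1 (dd * rho / (16 * (Cp + 1)))). pose proof (Rmin_r 1 (dd * rho / (16 * (Cp + 1)))).
    fold epsB in H1, H2.
    assert (HeB : 0 < epsB) by (unfold epsB; apply Rmin_pos; [lra|]; apply Rdiv_lt_0_compat; nra).
    exists epsB. split; [lra|]. intros eps Heps.
    set (h := RtoC rho).
    assert (Hhn : Cn h = rho) by (unfold h; rewrite Cn_RtoC; apply Rabs_pos_eq; lra).
    assert (Hlh : Cn (Cadd l h) <= R0) by (pose proof (Cn_add l h); unfold R0; lra).
    assert (Hl : Cn l <= R0) by (unfold R0; lra).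
    destruct (Hreg 0 ltac:(lra)) as [_ [_ [_ [_ Hrem0]]]].
    destruct (Hreg eps ltac:(lra)) as [_ [_ [_ [_ Hreme]]]].
    specialize (Hrem0 (Cadd l h) l l Hlh Hl Hl). specialize (Hreme (Cadd l h) l l Hlh Hl Hl).
    cbv beta in Hrem0, Hreme.
    replace (Csub (Cadd l h) l) with h in Hrem0, Hreme by Cring.
    replace (Csub l l) with C0 in Hrem0, Hreme by Cring. rewrite Cn_C0, Hhn in Hrem0, Hreme.
    pose proof (Hpert eps (Cadd l h) ltac:(lra) Hlh) as P1.
    pose proof (Hpert eps l ltac:(lra) Hl) as P2.
    assert (Hdiff : Cn (Csub (F eps l) (F 0 l)) * rho <= dd / 4 * rho).
    { rewrite <- Hhn, <- Cn_mul.
      replace (Cmul (Csub (F eps l) (F 0 l)) h) with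
        (Cadd (Cadd (Csub (Csub (Csub (charfun L N 0 (Cadd l h)) (charfun L N 0 l)) (Cmul (F 0 l) h))
                          (Csub (Csub (charfun L N eps (Cadd l h)) (charfun L N eps l)) (Cmul (F eps l) h)))
                    (Csub (charfun L N eps (Cadd l h)) (charfun L N 0 (Cadd l h))))
              (Copp (Csub (charfun L N eps l) (charfun L N 0 l)))) by Cring.
      eapply Rle_trans; [apply Cn_add|]. rewrite Cn_opp.
      eapply Rle_trans; [apply Rplus_le_compat_r; apply Cn_add|].
      eapply Rle_trans; [apply Rplus_le_compat_r; apply Rplus_le_compat_r; apply Cn_sub|].
      rewrite Hhn.
      assert (E1 : eps * eps <= eps) by nra.
      assert (E2 : Cp * (eps * eps) <= Cp * (dd * rho / (16 * (Cp + 1)))).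
      { apply Rmult_le_compat_l; auto. lra. }
      assert (E3 : Cp * (dd * rho / (16 * (Cp + 1))) <= dd * rho / 16).
      { apply Rmult_le_reg_r with (16 * (Cp + 1)); [lra|].
        replace (Cp * (dd * rho / (16 * (Cp + 1))) * (16 * (Cp + 1))) with (Cp * (dd * rho)) by (field; lra).
        replace (dd * rho / 16 * (16 * (Cp + 1))) with (Cp * (dd * rho) + dd * rho) by field.
        nra. }
      assert (E4 : D * rho <= dd / 16).
      { assert (D * rho <= D * (dd / (16 * (D + 1)))) by (apply Rmult_le_compat_l; lra).
        assert (D * (dd / (16 * (D + 1))) <= dd / 16).
        { apply Rmult_le_reg_r with (16 * (D + 1)); [lra|].
          replace (D * (dd / (16 * (D + 1))) * (16 * (D + 1))) with (D * dd) by (field; lra).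
          replace (dd / 16 * (16 * (D + 1))) with (D * dd + dd) by field. lra. }
        lra. }
      assert (E5 : D * (rho * (rho + 0)) <= dd / 16 * rho).
      { replace (D * (rho * (rho + 0))) with ((D * rho) * rho) by ring. apply Rmult_le_compat_r; lra. }
      lra. }
    assert (Hdiff2 : Cn (Csub (F eps l) (F 0 l)) <= dd / 4) by (apply Rmult_le_reg_r with rho; auto).
    pose proof (Cn_tri (F eps l) (F 0 l) d).
    pose proof (Cn_le_sub d (F eps l)). rewrite Cn_sub_sym in H4. fold dd in H4.
    lra. }
  destruct HB as [epsB [HepsB HB]].
  set (r1 := Rmin 1 (dd / (8 * (D + 1)))).
  assert (Hr1 : 0 < r1) by (apply Rmin_pos; [lra|]; apply Rdiv_lt_0_compat; lra).
  assert (HC : forall eps z w, 0 <= eps <= epsB -> Cn (Csub z l) < r1 -> Cn (Csub w l) < r1 ->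
             charfun L N eps z = charfun L N eps w -> z = w).
  { intros eps z w He Hz Hw Heq.
    pose proof (Rmin_l 1 (dd / (8 * (D + 1)))). pose proof (Rmin_r 1 (dd / (8 * (D + 1)))). fold r1 in H, H0.
    assert (HzR : Cn z <= R0) by (pose proof (Cn_le_sub z l); unfold R0; lra).
    assert (HwR : Cn w <= R0) by (pose proof (Cn_le_sub w l); unfold R0; lra).
    assert (Hl : Cn l <= R0) by (unfold R0; lra).
    destruct (Hreg eps ltac:(lra)) as [_ [_ [_ [_ Hrem]]]].
    specialize (Hrem z w l HzR HwR Hl). cbv beta in Hrem.
    rewrite Heq in Hrem.
    replace (Csub (Csub (charfun L N eps w) (charfun L N eps w)) (Cmul (F eps l) (Csub z w)))
      with (Copp (Cmul (F eps l) (Csub z w))) in Hrem by Cring.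
    rewrite Cn_opp, Cn_mul in Hrem.
    pose proof (HB eps He).
    set (Dl := Cn (Csub z w)) in *. assert (0 <= Dl) by apply Cn_nonneg.
    assert (D * (Dl * (Cn (Csub z l) + Cn (Csub w l))) <= Dl * (dd / 4)).
    { assert (Cn (Csub z l) + Cn (Csub w l) <= 2 * r1) by lra.
      assert (D * 2 * r1 <= dd / 4).
      { assert (D * 2 * r1 <= D * 2 * (dd / (8 * (D + 1)))) by (apply Rmult_le_compat_l; lra).
        assert (D * 2 * (dd / (8 * (D + 1))) <= dd / 4).
        { apply Rmult_le_reg_r with (8 * (D + 1)); [lra|].
          replace (D * 2 * (dd / (8 * (D + 1))) * (8 * (D + 1))) with (2 * D * dd) by (field; lra).
          replace (dd / 4 * (8 * (D + 1))) with (2 * D * dd + 2 * dd) by field. lra. }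
        lra. }
      assert (Dl * (Cn (Csub z l) + Cn (Csub w l)) <= Dl * (2 * r1)) by (apply Rmult_le_compat_l; lra).
      assert (D * (Dl * (Cn (Csub z l) + Cn (Csub w l))) <= D * (Dl * (2 * r1))) by (apply Rmult_le_compat_l; lra).
      assert (D * (Dl * (2 * r1)) = Dl * (D * 2 * r1)) by ring.
      assert (Dl * (D * 2 * r1) <= Dl * (dd / 4)) by (apply Rmult_le_compat_l; lra).
      lra. }
    assert (dd / 2 * Dl <= Cn (F eps l) * Dl) by (apply Rmult_le_compat_r; lra).
    assert (Dl = 0) by nra.
    apply Csub_eq0. auto. }
  assert (HE : exists dstar, 0 < dstar /\ forall z, charfun L N 0 z = C0 -> lam0 - dstar <= fst z -> z = l).
  { apply NNPP; intro Hn.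
    assert (Hseq : forall n : nat, exists z, charfun L N 0 z = C0 /\ lam0 - lam0 / (INR n + 2) <= fst z /\ z <> l).
    { intro n. apply NNPP; intro Hn2. apply Hn. exists (lam0 / (INR n + 2)). split.
      { apply Rdiv_lt_0_compat; auto. pose proof (pos_INR n); lra. }
      intros z Hz Hf. destruct (classic (z = l)) as [E|Hne]; auto. exfalso. apply Hn2. exists z. auto. }
    set (zs := fun n => proj1_sig (constructive_indefinite_description _ (Hseq n))).
    assert (Hzs : forall n, charfun L N 0 (zs n) = C0 /\ lam0 - lam0 / (INR n + 2) <= fst (zs n) /\ zs n <> l).
    { intro n. unfold zs. apply proj2_sig. }
    assert (Hmono : forall n, lam0 / (INR n + 2) <= lam0 / 2).
    { intro n. unfold Rdiv. apply Rmult_le_compat_l; [lra|]. apply Rinv_le_contravar; [lra|].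
      pose proof (pos_INR n); lra. }
    assert (Hbd : forall n, Cn (zs n) <= Y0).
    { intro n. destruct (Rle_or_lt (Cn (zs n)) Y0) as [X|X]; auto. exfalso.
      destruct (Hzs n) as [A [B _]]. specialize (Hmono n).
      apply (Hlarge 0 (zs n)); auto; try lra. }
    destruct (BW2 zs Y0 Hbd) as [zstar Hadh].
    assert (Hf0 : charfun L N 0 zstar = C0).
    { destruct (Hreg 0 ltac:(lra)) as [_ [_ [_ [Hlip _]]]].
      apply (lim_zero (charfun L N 0) D R0 Y0 zs zstar); auto.
      - unfold R0; lra.
      - intros e He. exists 0%nat. intros n _. destruct (Hzs n) as [A _]. rewrite A, Cn_C0. lra. }
    assert (Hfst : lam0 <= fst zstar).
    { destruct (Rle_or_lt lam0 (fst zstar)) as [X|X]; auto. exfalso.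
      set (g := lam0 - fst zstar).
      destruct (archimed_cor1 (g / (2 * lam0))) as [N1 [HN1 HN1p]].
      { apply Rdiv_lt_0_compat; unfold g; lra. }
      assert (Hc : lam0 - lam0 / (INR N1 + 2) <= fst zstar).
      { apply (lim_closed zs zstar fst (lam0 - lam0 / (INR N1 + 2)) N1); auto.
        - apply P_fst.
        - intros n Hn1. destruct (Hzs n) as [_ [B _]].
          assert (lam0 / (INR n + 2) <= lam0 / (INR N1 + 2)).
          { unfold Rdiv. apply Rmult_le_compat_l; [lra|]. apply Rinv_le_contravar.
            pose proof (pos_INR N1); lra. apply le_INR in Hn1. lra. }
          lra. }
      assert (lam0 / (INR N1 + 2) < g / 2).
      { assert (HN1r : 0 < INR N1) by (apply lt_0_INR; auto).
        assert (lam0 / (INR N1 + 2) <= lam0 * / INR N1).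
        { unfold Rdiv. apply Rmult_le_compat_l; [lra|]. apply Rinv_le_contravar; lra. }
        assert (lam0 * / INR N1 < lam0 * (g / (2 * lam0))) by (apply Rmult_lt_compat_l; auto).
        replace (lam0 * (g / (2 * lam0))) with (g / 2) in H0 by (field; lra). lra. }
      unfold g in *. lra. }
    assert (Hzl : zstar = l).
    { destruct (classic (zstar = l)) as [E|E]; auto. specialize (Hdom zstar Hf0 E). lra. }
    destruct (Hadh r1 Hr1 0%nat) as [n [_ Hn1]]. rewrite Hzl in Hn1.
    destruct (Hzs n) as [A [_ B]]. apply B.
    apply (HC 0 (zs n) l); auto; try lra.
    - replace (Csub l l) with C0 by Cring. rewrite Cn_C0. auto.
    - rewrite A. auto. }
  destruct HE as [dstar [Hdstar HE]].
  exists (Rmin dstar lam0). split; [apply Rmin_pos; lra|].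
  intros delta [Hdel1 Hdel2] delta1 Hdelta1.
  assert (Hdel3 : delta < dstar) by (pose proof (Rmin_l dstar lam0); lra).
  assert (Hdel4 : delta < lam0) by (pose proof (Rmin_r dstar lam0); lra).
  assert (HF : exists m, 0 < m /\ forall z, lam0 - delta <= fst z -> Cn z <= Y0 -> r1 <= Cn (Csub z l) ->
             m <= Cn (charfun L N 0 z)).
  { apply NNPP; intro Hn.
    assert (Hseq : forall n : nat, exists z, lam0 - delta <= fst z /\ Cn z <= Y0 /\ r1 <= Cn (Csub z l) /\
                     Cn (charfun L N 0 z) < / (INR n + 1)).
    { intro n. apply NNPP; intro Hn2. apply Hn. exists (/ (INR n + 1)). split.
      { apply Rinv_0_lt_compat. pose proof (pos_INR n); lra. }
      intros z H1 H2 H3. destruct (Rle_or_lt (/ (INR n + 1)) (Cn (charfun L N 0 z))) as [X|X]; auto.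
      exfalso. apply Hn2. exists z. auto. }
    set (zs := fun n => proj1_sig (constructive_indefinite_description _ (Hseq n))).
    assert (Hzs : forall n, lam0 - delta <= fst (zs n) /\ Cn (zs n) <= Y0 /\ r1 <= Cn (Csub (zs n) l) /\
                     Cn (charfun L N 0 (zs n)) < / (INR n + 1)).
    { intro n. unfold zs. apply proj2_sig. }
    assert (Hbd : forall n, Cn (zs n) <= Y0) by (intro n; apply Hzs).
    destruct (BW2 zs Y0 Hbd) as [zstar Hadh].
    assert (Hf0 : charfun L N 0 zstar = C0).
    { destruct (Hreg 0 ltac:(lra)) as [_ [_ [_ [Hlip _]]]].
      apply (lim_zero (charfun L N 0) D R0 Y0 zs zstar); auto.
      - unfold R0; lra.
      - intros e He. destruct (archimed_cor1 e He) as [N0 [HN0 HN0p]]. exists N0. intros n Hn0.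
        destruct (Hzs n) as [_ [_ [_ A]]].
        assert (/ (INR n + 1) <= / INR N0).
        { apply Rinv_le_contravar. apply lt_0_INR; auto. apply le_INR in Hn0. lra. }
        lra. }
    assert (Hfst : lam0 - delta <= fst zstar).
    { apply (lim_closed zs zstar fst (lam0 - delta) 0); auto. apply P_fst. intros n _. apply Hzs. }
    assert (Hdist : r1 <= Cn (Csub zstar l)).
    { apply (lim_closed zs zstar (fun x => Cn (Csub x l)) r1 0); auto. apply P_dist. intros n _. apply Hzs. }
    assert (zstar = l) by (apply HE; auto; lra).
    rewrite H in Hdist. replace (Csub l l) with C0 in Hdist by Cring. rewrite Cn_C0 in Hdist. lra. }
  destruct HF as [m [Hm HF]].
  destruct (Hconv (Rmin delta (Rmin delta1 r1))) as [r [Hr Hlr]].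
  { apply Rmin_pos; [lra|apply Rmin_pos; lra]. }
  set (eps0 := Rmin (Rmin eta epsB) (Rmin r (Rmin (m / (Cp + 1)) (1 / (2 * (lam0 + delta1)))))).
  assert (Hm2 : 0 < m / (Cp + 1)) by (apply Rdiv_lt_0_compat; lra).
  assert (Hm3 : 0 < 1 / (2 * (lam0 + delta1))) by (apply Rdiv_lt_0_compat; lra).
  exists eps0. split.
  { unfold eps0. repeat apply Rmin_pos; lra. }
  intros eps [He1 He2].
  assert (E1 : eps < eta) by (unfold eps0 in He2; pose proof (Rmin_l (Rmin eta epsB) (Rmin r (Rmin (m / (Cp + 1)) (1 / (2 * (lam0 + delta1)))))); pose proof (Rmin_l eta epsB); lra).
  assert (E2 : eps < epsB) by (unfold eps0 in He2; pose proof (Rmin_l (Rmin eta epsB) (Rmin r (Rmin (m / (Cp + 1)) (1 / (2 * (lam0 + delta1)))))); pose proof (Rmin_r eta epsB); lra).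
  assert (E3 : eps < r) by (unfold eps0 in He2; pose proof (Rmin_r (Rmin eta epsB) (Rmin r (Rmin (m / (Cp + 1)) (1 / (2 * (lam0 + delta1)))))); pose proof (Rmin_l r (Rmin (m / (Cp + 1)) (1 / (2 * (lam0 + delta1))))); lra).
  assert (E4 : eps < m / (Cp + 1)) by (unfold eps0 in He2; pose proof (Rmin_r (Rmin eta epsB) (Rmin r (Rmin (m / (Cp + 1)) (1 / (2 * (lam0 + delta1)))))); pose proof (Rmin_r r (Rmin (m / (Cp + 1)) (1 / (2 * (lam0 + delta1))))); pose proof (Rmin_l (m / (Cp + 1)) (1 / (2 * (lam0 + delta1)))); lra).
  assert (E5 : eps < 1 / (2 * (lam0 + delta1))) by (unfold eps0 in He2; pose proof (Rmin_r (Rmin eta epsB) (Rmin r (Rmin (m / (Cp + 1)) (1 / (2 * (lam0 + delta1)))))); pose proof (Rmin_r r (Rmin (m / (Cp + 1)) (1 / (2 * (lam0 + delta1))))); pose proof (Rmin_r (m / (Cp + 1)) (1 / (2 * (lam0 + delta1)))); lra).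
  assert (Hlr' := Hlr eps (conj He1 E3)).
  pose proof (Rmin_l delta (Rmin delta1 r1)). pose proof (Rmin_r delta (Rmin delta1 r1)).
  pose proof (Rmin_l delta1 r1). pose proof (Rmin_r delta1 r1).
  pose proof (Rabs_le_inv _ _ (Rlt_le _ _ Hlr')) as Hlr2.
  split; [lra|].
  intros z Hz [Hz1 Hz2].
  assert (Hepsle : eps * eps <= eps) by nra.
  assert (Hz3 : eps * eps * fst z <= 1 / 2).
  { assert (eps * (lam0 + delta1) < 1 / 2).
    { apply Rmult_lt_reg_r with (/ (lam0 + delta1)). apply Rinv_0_lt_compat; lra.
      replace (eps * (lam0 + delta1) * / (lam0 + delta1)) with eps by (field; lra).
      replace (1 / 2 * / (lam0 + delta1)) with (1 / (2 * (lam0 + delta1))) by (field; lra). lra. }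
    assert (0 <= fst z) by lra. nra. }
  assert (HzY : Cn z <= Y0).
  { destruct (Rle_or_lt (Cn z) Y0) as [X|X]; auto. exfalso. apply (Hlarge eps z); auto; lra. }
  assert (Hzl : Cn (Csub z l) < r1).
  { destruct (Rle_or_lt r1 (Cn (Csub z l))) as [X|X]; auto. exfalso.
    pose proof (HF z ltac:(lra) HzY X).
    assert (HzR : Cn z <= R0) by (unfold R0; lra).
    pose proof (Hpert eps z ltac:(lra) HzR). rewrite Hz in H4.
    replace (Csub C0 (charfun L N 0 z)) with (Copp (charfun L N 0 z)) in H4 by Cring.
    rewrite Cn_opp in H4.
    assert (Cp * (eps * eps) <= Cp * eps) by (apply Rmult_le_compat_l; auto).
    assert (Cp * eps < m).
    { assert ((Cp + 1) * eps < m).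
      { apply Rmult_lt_reg_r with (/ (Cp + 1)). apply Rinv_0_lt_compat; lra.
        replace ((Cp + 1) * eps * / (Cp + 1)) with eps by (field; lra). unfold Rdiv in E4. lra. }
      nra. }
    lra. }
  apply (HC eps z (RtoC (lam eps))); auto; try lra.
  - replace (Csub (RtoC (lam eps)) l) with (RtoC (lam eps - lam0)) by (unfold l; Cring).
    rewrite Cn_RtoC. lra.
  - rewrite Hz. symmetry. apply Hlam. lra.
Qed.
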